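(* Let $t\ge3$ be an integer, and let $Q$ be a $(2P_3,C_4,C_6,C_7,T_0,(t+1)\text{-pentagon})$-free $t$-frame with an associated $t$-frame partition $(A;B_1,\dots,B_t;C_1,\dots,C_t)$. Set $B:=B_1\cup\dots\cup B_t$ and $C:=C_1\cup\dots\cup C_t$. Let $A=\{a_1,\dots,a_r\}$ be ordered so that $d_Q(a_r)\le\dots\le d_Q(a_1)$, and for each $i\in\{1,\dots,t\}$ let $B_i=\{b^i_1,\dots,b^i_{r_i}\}$ be ordered so that $d_Q(b^i_{r_i})\le\dots\le d_Q(b^i_1)$ and $C_i=\{c^i_1,\dots,c^i_{s_i}\}$ be ordered so that $d_Q(c^i_{s_i})\le\dots\le d_Q(c^i_1)$. Then: (a) $A,B_1,\dots,B_t,C_1,\dots,C_t$ are cliques; (b) either $A$ is complete to $B$, or all of the following hold: $t=3$; there exists $i^*\in\{1,2,3\}$ such that $B\setminus B_{i^*}\subseteq N_Q(a_r)\cap B\subseteq\dots\subseteq N_Q(a_1)\cap B=B$ (in particular $A$ is complete to $B\setminus B_{i^*}$); and for all $i\in\{1,2,3\}$, $B_i$ is complete to $C_i$; (c) for all $i\in\{1,\dots,t\}$: $\{c^i_1\}\subseteq N_Q(b^i_{r_i})\cap C_i\subseteq\dots\subseteq N_Q(b^i_1)\cap C_i=C_i$, and $\{b^i_1\}\subseteq N_Q(c^i_{s_i})\cap B_i\subseteq\dots\subseteq N_Q(c^i_1)\cap B_i=B_i$; (d) if $A$ is complete to $B$, then $Q$ is a $t$-villa with $t$-villa partition $(A;B_1,\dots,B_t;C_1,\dots,C_t)$;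 (e) if $A$ is not complete to $B$, then $t=3$ and $Q$ is a 5-basket with 5-basket partition $(A;B_1,B_2,B_3;C_1,C_2,C_3;\emptyset)$.
   Context: Graphs are finite, simple, nonnull; $d_Q(v)$ is the degree and $N_Q(v)$ the neighbourhood of $v$ in $Q$. A graph is $(H_1,\dots,H_m)$-free if it has no induced subgraph isomorphic to any $H_i$. $P_k$, $C_k$ are the path and cycle on $k$ vertices; $2P_3$ is two disjoint copies of $P_3$. $T_0$ is the graph with vertices $p,q,u_0,u_1,u_2,u_3,w_1,w_2,w_3$ and edges $pq,pu_0,pu_2,pu_3,qu_1,qu_2,qu_3,u_0w_1,u_1w_1,u_2w_2,u_3w_3,w_1w_2,w_1w_3,w_2w_3$. For $s\ge3$ the $s$-pentagon is the graph on vertices $a,b_1,\dots,b_s,c_1,\dots,c_s$ where $a$ is adjacent to every $b_i$ and no $c_i$, $\{b_i\}$ is stable, $\{c_i\}$ is a clique, and $b_ic_j$ is an edge iff $i=j$. For disjoint vertex sets $X,Y$, $X$ is complete (anticomplete) to $Y$ if every vertex of $X$ is adjacent (nonadjacent) to every vertex of $Y$. $t$-frame ($t\ge3$): a graph $Q$ whose vertex set partitions into nonempty sets $A,B_1,\dots,B_t,C_1,\dots,C_t$ (no condition on adjacency inside a set) such that every vertex of $A$ has a neighbour in at least two of $B_1,\dots,B_t$; $A$ is anticomplete to $C_1\cup\dots\cup C_t$; the $B_i$ are pairwise anticomplete; the $C_i$ are pairwise complete; $B_i$ is anticomplete to $C_j$ for $i\ne j$; and for each $i$, every vertex of $B_i$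 has a neighbour in $A$ and a neighbour in $C_i$, and every vertex of $C_i$ has a neighbour in $B_i$. This is a $t$-frame partition $(A;B_1,\dots,B_t;C_1,\dots,C_t)$. $t$-villa with $t$-villa partition $(A;B_1,\dots,B_t;C_1,\dots,C_t)$: $A,B_i,C_i$ are nonempty cliques partitioning the vertex set, $A$ is complete to $B_1\cup\dots\cup B_t$ and anticomplete to $C_1\cup\dots\cup C_t$; the $B_i$ pairwise anticomplete; the $C_i$ pairwise complete; $B_i$ anticomplete to $C_j$ for $i\ne j$; each $B_i$ can be ordered $\beta_1,\dots,\beta_{r}$ with $\emptyset\ne N(\beta_r)\cap C_i\subseteq\dots\subseteq N(\beta_1)\cap C_i=C_i$. 5-basket with 5-basket partition $(A;B_1,B_2,B_3;C_1,C_2,C_3;F)$: the sets partition the vertex set; $A,B_i,C_i$ are nonempty cliques, $F$ a possibly empty clique; $B_1,B_2,B_3$ pairwise anticomplete; $C_1,C_2,C_3$ pairwise complete; there is $i^*$ such that $A$ is complete to $(B_1\cup B_2\cup B_3)\setminus B_{i^*}$ and $A$ can be ordered $\alpha_1,\dots,\alpha_m$ with $N(\alpha_m)\cap B_{i^*}\subseteq\dots\subseteq N(\alpha_1)\cap B_{i^*}=B_{i^*}$; $A$ anticomplete to $C_1\cup C_2\cup C_3$; each $B_i$ complete to $C_i$ and anticomplete to $C_j$ ($j\ne i$); and there is $j^*$ such that $F$ is complete to $V\setminus(B_{j^*}\cup C_{j^*}\cup F)$ and anticomplete to $B_{j^*}\cup C_{j^*}$. *)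

(* Defs.v *)
From mathcomp Require Import all_boot.
Set Implicit Arguments. Unset Strict Implicit. Unset Printing Implicit Defensive.

Section Graphs.
Variable T : finType.
Variable e : rel T.

Definition simple_graph := symmetric e /\ irreflexive e.

Definition nbhd (v : T) : {set T} := [set u | e v u].
Definition deg (v : T) : nat := #|nbhd v|.

Definition clique (S : {set T}) :=
  forall x y, x \in S -> y \in S -> x != y -> e x y.
Definition complete (X Y : {set T}) := forall x y, x \in X -> y \in Y -> e x y.
Definition anticomplete (X Y : {set T}) := forall x y, x \in X -> y \in Y -> ~~ e x y.

Definition induced_sub (U : finType) (h : rel U) :=
  exists f : U -> T, injective f /\ forall x y, h x y = e (f x) (f y).
Definition H_free (U : finType) (h : rel U) := ~ induced_sub h.

Definition partitions (parts : seq {set T}) :=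
  forall x, count (fun S : {set T} => x \in S) parts = 1.

Definition enumerates (s : seq T) (S : {set T}) :=
  uniq s /\ forall x, (x \in s) = (x \in S).

Definition deg_nonincr (s : seq T) :=
  forall x0 j k, j <= k -> k < size s -> deg (nth x0 s k) <= deg (nth x0 s j).

Definition nested_nbhd (s : seq T) (X : {set T}) :=
  forall x0 j k, j <= k -> k < size s ->
    nbhd (nth x0 s k) :&: X \subset nbhd (nth x0 s j) :&: X.

Definition first_full (s : seq T) (X : {set T}) :=
  forall x0, 0 < size s -> nbhd (nth x0 s 0) :&: X = X.

Definition last_elt (x0 : T) (s : seq T) := nth x0 s (size s).-1.

Variable t : nat.

Definition Bunion (B : 'I_t -> {set T}) : {set T} := \bigcup_(i < t) B i.

Definition parts_of (A : {set T}) (B C : 'I_t -> {set T}) : seq {set T} :=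
  A :: [seq B i | i <- enum 'I_t] ++ [seq C i | i <- enum 'I_t].

Definition frame_partition (A : {set T}) (B C : 'I_t -> {set T}) :=
  3 <= t /\ partitions (parts_of A B C) /\
  A != set0 /\ (forall i, B i != set0) /\ (forall i, C i != set0) /\
  (forall a, a \in A -> exists i j, [/\ i != j,
          [exists b in B i, e a b] & [exists b in B j, e a b]]) /\
  (forall i, anticomplete A (C i)) /\
  (forall i j, i != j -> anticomplete (B i) (B j)) /\
  (forall i j, i != j -> complete (C i) (C j)) /\
  (forall i j, i != j -> anticomplete (B i) (C j)) /\
  (forall i, (forall b, b \in B i ->
                [exists a in A, e b a] /\ [exists c in C i, e b c])
          /\ (forall c, c \in C i -> [exists b in B i, e c b])).

Definition villa_partition (A : {set T}) (B C : 'I_t -> {set T}) :=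
  3 <= t /\ partitions (parts_of A B C) /\
  A != set0 /\ (forall i, B i != set0) /\ (forall i, C i != set0) /\
  clique A /\ (forall i, clique (B i)) /\ (forall i, clique (C i)) /\
  complete A (Bunion B) /\ (forall i, anticomplete A (C i)) /\
  (forall i j, i != j -> anticomplete (B i) (B j)) /\
  (forall i j, i != j -> complete (C i) (C j)) /\
  (forall i j, i != j -> anticomplete (B i) (C j)) /\
  (forall i, exists s, [/\ enumerates s (B i), nested_nbhd s (C i),
            first_full s (C i) &
            forall x0, 0 < size s -> nbhd (last_elt x0 s) :&: C i != set0]).

Definition basket_partition (A : {set T}) (B C : 'I_t -> {set T}) (F : {set T}) :=
  t = 3 /\ partitions (rcons (parts_of A B C) F) /\
  A != set0 /\ (forall i, B i != set0) /\ (forall i, C i != set0) /\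
  clique A /\ (forall i, clique (B i)) /\ (forall i, clique (C i)) /\ clique F /\
  (forall i j, i != j -> anticomplete (B i) (B j)) /\
  (forall i j, i != j -> complete (C i) (C j)) /\
  (exists istar, complete A (Bunion B :\: B istar) /\
     exists s, [/\ enumerates s A, nested_nbhd s (B istar) &
                   first_full s (B istar)]) /\
  (forall i, anticomplete A (C i)) /\
  (forall i, complete (B i) (C i)) /\
  (forall i j, i != j -> anticomplete (B i) (C j)) /\
  (exists jstar, complete F (~: (B jstar :|: C jstar :|: F))
              /\ anticomplete F (B jstar :|: C jstar)).

End Graphs.

Definition twoP3_edge (x y : 'I_6) : bool :=
  let a := nat_of_ord x in let b := nat_of_ord y in
  [|| (a == 0) && (b == 1), (a == 1) && (b == 2),
      (a == 3) && (b == 4) | (a == 4) && (b == 5)].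
Definition twoP3 : rel 'I_6 := fun x y => twoP3_edge x y || twoP3_edge y x.

(* cycle C_k on 'I_k (used for k >= 3) *)
Definition cycle_rel (k : nat) : rel 'I_k :=
  fun x y => (nat_of_ord y == x.+1 %% k) || (nat_of_ord x == y.+1 %% k).

(* T_0 on 'I_9: p=0, q=1, u0=2, u1=3, u2=4, u3=5, w1=6, w2=7, w3=8 *)
Definition T0_edges : seq (nat * nat) :=
  [:: (0,1); (0,2); (0,4); (0,5); (1,3); (1,4); (1,5); (2,6); (3,6);
      (4,7); (5,8); (6,7); (6,8); (7,8)].
Definition T0_rel : rel 'I_9 :=
  fun x y => ((nat_of_ord x, nat_of_ord y) \in T0_edges)
          || ((nat_of_ord y, nat_of_ord x) \in T0_edges).

(* s-pentagon on option ('I_s + 'I_s): None = a, inl i = b_i, inr i = c_i *)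
Definition pent_edge (s : nat) (x y : option ('I_s + 'I_s)) : bool :=
  match x, y with
  | None, Some (inl _) => true
  | Some (inr i), Some (inr j) => i != j
  | Some (inl i), Some (inr j) => i == j
  | _, _ => false
  end.
Definition pentagon_rel (s : nat) : rel (option ('I_s + 'I_s)) :=
  fun x y => pent_edge x y || pent_edge y x.

(* Main.v *)
Require Import Defs.
From mathcomp Require Import all_boot zify.
Set Implicit Arguments. Unset Strict Implicit. Unset Printing Implicit Defensive.

Section Basic.
Variables (T : finType) (e : rel T).
Hypothesis sym : symmetric e.
Hypothesis irr : irreflexive e.

Lemma esym x y : e x y -> e y x. Proof. by rewrite sym. Qed.
Lemma nesym x y : ~~ e x y -> ~~ e y x. Proof. by rewrite sym. Qed.
Lemma adj_neq x y : e x y -> x != y.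
Proof. by apply: contraTneq => ->; rewrite irr. Qed.
Lemma wit_neq x y z : e x z -> ~~ e y z -> x != y.
Proof. by move=> H1; apply: contraNneq => <-. Qed.
Lemma wit_neq2 x y z : e y z -> ~~ e x z -> x != y.
Proof. by move=> H1; apply: contraNneq => ->. Qed.
Lemma inj_nth n (l : seq T) d : size l = n -> uniq l ->
  injective (fun x : 'I_n => nth d l x).
Proof.
move=> Hs Hu x y /eqP; rewrite nth_uniq ?Hs //.
by move/eqP/val_inj.
Qed.

Lemma no_C4 (HF : H_free e (@cycle_rel 4)) v0 v1 v2 v3 :
  e v0 v1 ->
  ~~ e v0 v2 ->
  e v0 v3 ->
  e v1 v2 ->
  ~~ e v1 v3 ->
  e v2 v3 ->
  v0 != v2 ->
  v1 != v3 -> False.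
Proof.
move=> H_0_1 H_0_2 H_0_3 H_1_2 H_1_3 H_2_3 n_0_2 n_1_3.
apply: HF.
exists (fun x : 'I_4 => nth v0 [:: v0; v1; v2; v3] x); split.
  apply: inj_nth => //.
  have n_0_1 : v0 != v1 := adj_neq H_0_1.
  have n_0_3 : v0 != v3 := adj_neq H_0_3.
  have n_1_2 : v1 != v2 := adj_neq H_1_2.
  have n_2_3 : v2 != v3 := adj_neq H_2_3.
  by rewrite /= !inE (negbTE n_0_1) (negbTE n_0_2) (negbTE n_0_3) (negbTE n_1_2) (negbTE n_1_3) (negbTE n_2_3).
move=> [x Hx] [y Hy].
have E_0_0 : e v0 v0 = false := irr v0.
have E_0_1 : e v0 v1 = true := H_0_1.
have E_0_2 : e v0 v2 = false := negbTE H_0_2.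
have E_0_3 : e v0 v3 = true := H_0_3.
have E_1_1 : e v1 v1 = false := irr v1.
have E_1_0 : e v1 v0 = true := (esym H_0_1).
have E_1_2 : e v1 v2 = true := H_1_2.
have E_1_3 : e v1 v3 = false := negbTE H_1_3.
have E_2_2 : e v2 v2 = false := irr v2.
have E_2_0 : e v2 v0 = false := negbTE (nesym H_0_2).
have E_2_1 : e v2 v1 = true := (esym H_1_2).
have E_2_3 : e v2 v3 = true := H_2_3.
have E_3_3 : e v3 v3 = false := irr v3.
have E_3_0 : e v3 v0 = true := (esym H_0_3).
have E_3_1 : e v3 v1 = false := negbTE (nesym H_1_3).
have E_3_2 : e v3 v2 = true := (esym H_2_3).
case: x Hx => [|[|[|[|x]]]] Hx //; case: y Hy => [|[|[|[|y]]]] Hy //;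
  by rewrite /= ?E_0_0 ?E_0_1 ?E_0_2 ?E_0_3 ?E_1_1 ?E_1_0 ?E_1_2 ?E_1_3 ?E_2_2 ?E_2_0 ?E_2_1 ?E_2_3 ?E_3_3 ?E_3_0 ?E_3_1 ?E_3_2.
Qed.

Lemma no_C6 (HF : H_free e (@cycle_rel 6)) v0 v1 v2 v3 v4 v5 :
  e v0 v1 ->
  ~~ e v0 v2 ->
  ~~ e v0 v3 ->
  ~~ e v0 v4 ->
  e v0 v5 ->
  e v1 v2 ->
  ~~ e v1 v3 ->
  ~~ e v1 v4 ->
  ~~ e v1 v5 ->
  e v2 v3 ->
  ~~ e v2 v4 ->
  ~~ e v2 v5 ->
  e v3 v4 ->
  ~~ e v3 v5 ->
  e v4 v5 -> False.
Proof.
move=> H_0_1 H_0_2 H_0_3 H_0_4 H_0_5 H_1_2 H_1_3 H_1_4 H_1_5 H_2_3 H_2_4 H_2_5 H_3_4 H_3_5 H_4_5.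
apply: HF.
exists (fun x : 'I_6 => nth v0 [:: v0; v1; v2; v3; v4; v5] x); split.
  apply: inj_nth => //.
  have n_0_1 : v0 != v1 := adj_neq H_0_1.
  have n_0_2 : v0 != v2 := wit_neq2 H_2_3 H_0_3.
  have n_0_3 : v0 != v3 := wit_neq H_0_1 (nesym H_1_3).
  have n_0_4 : v0 != v4 := wit_neq H_0_1 (nesym H_1_4).
  have n_0_5 : v0 != v5 := adj_neq H_0_5.
  have n_1_2 : v1 != v2 := adj_neq H_1_2.
  have n_1_3 : v1 != v3 := wit_neq (esym H_0_1) (nesym H_0_3).
  have n_1_4 : v1 != v4 := wit_neq (esym H_0_1) (nesym H_0_4).
  have n_1_5 : v1 != v5 := wit_neq H_1_2 (nesym H_2_5).
  have n_2_3 : v2 != v3 := adj_neq H_2_3.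
  have n_2_4 : v2 != v4 := wit_neq (esym H_1_2) (nesym H_1_4).
  have n_2_5 : v2 != v5 := wit_neq2 (esym H_0_5) (nesym H_0_2).
  have n_3_4 : v3 != v4 := adj_neq H_3_4.
  have n_3_5 : v3 != v5 := wit_neq2 (esym H_0_5) (nesym H_0_3).
  have n_4_5 : v4 != v5 := adj_neq H_4_5.
  by rewrite /= !inE (negbTE n_0_1) (negbTE n_0_2) (negbTE n_0_3) (negbTE n_0_4) (negbTE n_0_5) (negbTE n_1_2) (negbTE n_1_3) (negbTE n_1_4) (negbTE n_1_5) (negbTE n_2_3) (negbTE n_2_4) (negbTE n_2_5) (negbTE n_3_4) (negbTE n_3_5) (negbTE n_4_5).
move=> [x Hx] [y Hy].
have E_0_0 : e v0 v0 = false := irr v0.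
have E_0_1 : e v0 v1 = true := H_0_1.
have E_0_2 : e v0 v2 = false := negbTE H_0_2.
have E_0_3 : e v0 v3 = false := negbTE H_0_3.
have E_0_4 : e v0 v4 = false := negbTE H_0_4.
have E_0_5 : e v0 v5 = true := H_0_5.
have E_1_1 : e v1 v1 = false := irr v1.
have E_1_0 : e v1 v0 = true := (esym H_0_1).
have E_1_2 : e v1 v2 = true := H_1_2.
have E_1_3 : e v1 v3 = false := negbTE H_1_3.
have E_1_4 : e v1 v4 = false := negbTE H_1_4.
have E_1_5 : e v1 v5 = false := negbTE H_1_5.
have E_2_2 : e v2 v2 = false := irr v2.
have E_2_0 : e v2 v0 = false := negbTE (nesym H_0_2).
have E_2_1 : e v2 v1 = true := (esym H_1_2).
have E_2_3 : e v2 v3 = true := H_2_3.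
have E_2_4 : e v2 v4 = false := negbTE H_2_4.
have E_2_5 : e v2 v5 = false := negbTE H_2_5.
have E_3_3 : e v3 v3 = false := irr v3.
have E_3_0 : e v3 v0 = false := negbTE (nesym H_0_3).
have E_3_1 : e v3 v1 = false := negbTE (nesym H_1_3).
have E_3_2 : e v3 v2 = true := (esym H_2_3).
have E_3_4 : e v3 v4 = true := H_3_4.
have E_3_5 : e v3 v5 = false := negbTE H_3_5.
have E_4_4 : e v4 v4 = false := irr v4.
have E_4_0 : e v4 v0 = false := negbTE (nesym H_0_4).
have E_4_1 : e v4 v1 = false := negbTE (nesym H_1_4).
have E_4_2 : e v4 v2 = false := negbTE (nesym H_2_4).
have E_4_3 : e v4 v3 = true := (esym H_3_4).
have E_4_5 : e v4 v5 = true := H_4_5.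
have E_5_5 : e v5 v5 = false := irr v5.
have E_5_0 : e v5 v0 = true := (esym H_0_5).
have E_5_1 : e v5 v1 = false := negbTE (nesym H_1_5).
have E_5_2 : e v5 v2 = false := negbTE (nesym H_2_5).
have E_5_3 : e v5 v3 = false := negbTE (nesym H_3_5).
have E_5_4 : e v5 v4 = true := (esym H_4_5).
case: x Hx => [|[|[|[|[|[|x]]]]]] Hx //; case: y Hy => [|[|[|[|[|[|y]]]]]] Hy //;
  by rewrite /= ?E_0_0 ?E_0_1 ?E_0_2 ?E_0_3 ?E_0_4 ?E_0_5 ?E_1_1 ?E_1_0 ?E_1_2 ?E_1_3 ?E_1_4 ?E_1_5 ?E_2_2 ?E_2_0 ?E_2_1 ?E_2_3 ?E_2_4 ?E_2_5 ?E_3_3 ?E_3_0 ?E_3_1 ?E_3_2 ?E_3_4 ?E_3_5 ?E_4_4 ?E_4_0 ?E_4_1 ?E_4_2 ?E_4_3 ?E_4_5 ?E_5_5 ?E_5_0 ?E_5_1 ?E_5_2 ?E_5_3 ?E_5_4.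
Qed.

Lemma no_C7 (HF : H_free e (@cycle_rel 7)) v0 v1 v2 v3 v4 v5 v6 :
  e v0 v1 ->
  ~~ e v0 v2 ->
  ~~ e v0 v3 ->
  ~~ e v0 v4 ->
  ~~ e v0 v5 ->
  e v0 v6 ->
  e v1 v2 ->
  ~~ e v1 v3 ->
  ~~ e v1 v4 ->
  ~~ e v1 v5 ->
  ~~ e v1 v6 ->
  e v2 v3 ->
  ~~ e v2 v4 ->
  ~~ e v2 v5 ->
  ~~ e v2 v6 ->
  e v3 v4 ->
  ~~ e v3 v5 ->
  ~~ e v3 v6 ->
  e v4 v5 ->
  ~~ e v4 v6 ->
  e v5 v6 -> False.
Proof.
move=> H_0_1 H_0_2 H_0_3 H_0_4 H_0_5 H_0_6 H_1_2 H_1_3 H_1_4 H_1_5 H_1_6 H_2_3 H_2_4 H_2_5 H_2_6 H_3_4 H_3_5 H_3_6 H_4_5 H_4_6 H_5_6.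
apply: HF.
exists (fun x : 'I_7 => nth v0 [:: v0; v1; v2; v3; v4; v5; v6] x); split.
  apply: inj_nth => //.
  have n_0_1 : v0 != v1 := adj_neq H_0_1.
  have n_0_2 : v0 != v2 := wit_neq2 H_2_3 H_0_3.
  have n_0_3 : v0 != v3 := wit_neq H_0_1 (nesym H_1_3).
  have n_0_4 : v0 != v4 := wit_neq H_0_1 (nesym H_1_4).
  have n_0_5 : v0 != v5 := wit_neq H_0_1 (nesym H_1_5).
  have n_0_6 : v0 != v6 := adj_neq H_0_6.
  have n_1_2 : v1 != v2 := adj_neq H_1_2.
  have n_1_3 : v1 != v3 := wit_neq (esym H_0_1) (nesym H_0_3).
  have n_1_4 : v1 != v4 := wit_neq (esym H_0_1) (nesym H_0_4).
  have n_1_5 : v1 != v5 := wit_neq (esym H_0_1) (nesym H_0_5).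
  have n_1_6 : v1 != v6 := wit_neq H_1_2 (nesym H_2_6).
  have n_2_3 : v2 != v3 := adj_neq H_2_3.
  have n_2_4 : v2 != v4 := wit_neq (esym H_1_2) (nesym H_1_4).
  have n_2_5 : v2 != v5 := wit_neq (esym H_1_2) (nesym H_1_5).
  have n_2_6 : v2 != v6 := wit_neq2 (esym H_0_6) (nesym H_0_2).
  have n_3_4 : v3 != v4 := adj_neq H_3_4.
  have n_3_5 : v3 != v5 := wit_neq (esym H_2_3) (nesym H_2_5).
  have n_3_6 : v3 != v6 := wit_neq2 (esym H_0_6) (nesym H_0_3).
  have n_4_5 : v4 != v5 := adj_neq H_4_5.
  have n_4_6 : v4 != v6 := wit_neq2 (esym H_0_6) (nesym H_0_4).
  have n_5_6 : v5 != v6 := adj_neq H_5_6.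
  by rewrite /= !inE (negbTE n_0_1) (negbTE n_0_2) (negbTE n_0_3) (negbTE n_0_4) (negbTE n_0_5) (negbTE n_0_6) (negbTE n_1_2) (negbTE n_1_3) (negbTE n_1_4) (negbTE n_1_5) (negbTE n_1_6) (negbTE n_2_3) (negbTE n_2_4) (negbTE n_2_5) (negbTE n_2_6) (negbTE n_3_4) (negbTE n_3_5) (negbTE n_3_6) (negbTE n_4_5) (negbTE n_4_6) (negbTE n_5_6).
move=> [x Hx] [y Hy].
have E_0_0 : e v0 v0 = false := irr v0.
have E_0_1 : e v0 v1 = true := H_0_1.
have E_0_2 : e v0 v2 = false := negbTE H_0_2.
have E_0_3 : e v0 v3 = false := negbTE H_0_3.
have E_0_4 : e v0 v4 = false := negbTE H_0_4.
have E_0_5 : e v0 v5 = false := negbTE H_0_5.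
have E_0_6 : e v0 v6 = true := H_0_6.
have E_1_1 : e v1 v1 = false := irr v1.
have E_1_0 : e v1 v0 = true := (esym H_0_1).
have E_1_2 : e v1 v2 = true := H_1_2.
have E_1_3 : e v1 v3 = false := negbTE H_1_3.
have E_1_4 : e v1 v4 = false := negbTE H_1_4.
have E_1_5 : e v1 v5 = false := negbTE H_1_5.
have E_1_6 : e v1 v6 = false := negbTE H_1_6.
have E_2_2 : e v2 v2 = false := irr v2.
have E_2_0 : e v2 v0 = false := negbTE (nesym H_0_2).
have E_2_1 : e v2 v1 = true := (esym H_1_2).
have E_2_3 : e v2 v3 = true := H_2_3.
have E_2_4 : e v2 v4 = false := negbTE H_2_4.
have E_2_5 : e v2 v5 = false := negbTE H_2_5.
have E_2_6 : e v2 v6 = false := negbTE H_2_6.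
have E_3_3 : e v3 v3 = false := irr v3.
have E_3_0 : e v3 v0 = false := negbTE (nesym H_0_3).
have E_3_1 : e v3 v1 = false := negbTE (nesym H_1_3).
have E_3_2 : e v3 v2 = true := (esym H_2_3).
have E_3_4 : e v3 v4 = true := H_3_4.
have E_3_5 : e v3 v5 = false := negbTE H_3_5.
have E_3_6 : e v3 v6 = false := negbTE H_3_6.
have E_4_4 : e v4 v4 = false := irr v4.
have E_4_0 : e v4 v0 = false := negbTE (nesym H_0_4).
have E_4_1 : e v4 v1 = false := negbTE (nesym H_1_4).
have E_4_2 : e v4 v2 = false := negbTE (nesym H_2_4).
have E_4_3 : e v4 v3 = true := (esym H_3_4).
have E_4_5 : e v4 v5 = true := H_4_5.
have E_4_6 : e v4 v6 = false := negbTE H_4_6.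
have E_5_5 : e v5 v5 = false := irr v5.
have E_5_0 : e v5 v0 = false := negbTE (nesym H_0_5).
have E_5_1 : e v5 v1 = false := negbTE (nesym H_1_5).
have E_5_2 : e v5 v2 = false := negbTE (nesym H_2_5).
have E_5_3 : e v5 v3 = false := negbTE (nesym H_3_5).
have E_5_4 : e v5 v4 = true := (esym H_4_5).
have E_5_6 : e v5 v6 = true := H_5_6.
have E_6_6 : e v6 v6 = false := irr v6.
have E_6_0 : e v6 v0 = true := (esym H_0_6).
have E_6_1 : e v6 v1 = false := negbTE (nesym H_1_6).
have E_6_2 : e v6 v2 = false := negbTE (nesym H_2_6).
have E_6_3 : e v6 v3 = false := negbTE (nesym H_3_6).
have E_6_4 : e v6 v4 = false := negbTE (nesym H_4_6).
have E_6_5 : e v6 v5 = true := (esym H_5_6).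
case: x Hx => [|[|[|[|[|[|[|x]]]]]]] Hx //; case: y Hy => [|[|[|[|[|[|[|y]]]]]]] Hy //;
  by rewrite /= ?E_0_0 ?E_0_1 ?E_0_2 ?E_0_3 ?E_0_4 ?E_0_5 ?E_0_6 ?E_1_1 ?E_1_0 ?E_1_2 ?E_1_3 ?E_1_4 ?E_1_5 ?E_1_6 ?E_2_2 ?E_2_0 ?E_2_1 ?E_2_3 ?E_2_4 ?E_2_5 ?E_2_6 ?E_3_3 ?E_3_0 ?E_3_1 ?E_3_2 ?E_3_4 ?E_3_5 ?E_3_6 ?E_4_4 ?E_4_0 ?E_4_1 ?E_4_2 ?E_4_3 ?E_4_5 ?E_4_6 ?E_5_5 ?E_5_0 ?E_5_1 ?E_5_2 ?E_5_3 ?E_5_4 ?E_5_6 ?E_6_6 ?E_6_0 ?E_6_1 ?E_6_2 ?E_6_3 ?E_6_4 ?E_6_5.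
Qed.

Lemma no_2P3 (HF : H_free e twoP3) v0 v1 v2 v3 v4 v5 :
  e v0 v1 ->
  ~~ e v0 v2 ->
  ~~ e v0 v3 ->
  ~~ e v0 v4 ->
  ~~ e v0 v5 ->
  e v1 v2 ->
  ~~ e v1 v3 ->
  ~~ e v1 v4 ->
  ~~ e v1 v5 ->
  ~~ e v2 v3 ->
  ~~ e v2 v4 ->
  ~~ e v2 v5 ->
  e v3 v4 ->
  ~~ e v3 v5 ->
  e v4 v5 ->
  v0 != v2 ->
  v3 != v5 -> False.
Proof.
move=> H_0_1 H_0_2 H_0_3 H_0_4 H_0_5 H_1_2 H_1_3 H_1_4 H_1_5 H_2_3 H_2_4 H_2_5 H_3_4 H_3_5 H_4_5 n_0_2 n_3_5.
apply: HF.
exists (fun x : 'I_6 => nth v0 [:: v0; v1; v2; v3; v4; v5] x); split.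
  apply: inj_nth => //.
  have n_0_1 : v0 != v1 := adj_neq H_0_1.
  have n_0_3 : v0 != v3 := wit_neq H_0_1 (nesym H_1_3).
  have n_0_4 : v0 != v4 := wit_neq H_0_1 (nesym H_1_4).
  have n_0_5 : v0 != v5 := wit_neq H_0_1 (nesym H_1_5).
  have n_1_2 : v1 != v2 := adj_neq H_1_2.
  have n_1_3 : v1 != v3 := wit_neq (esym H_0_1) (nesym H_0_3).
  have n_1_4 : v1 != v4 := wit_neq (esym H_0_1) (nesym H_0_4).
  have n_1_5 : v1 != v5 := wit_neq (esym H_0_1) (nesym H_0_5).
  have n_2_3 : v2 != v3 := wit_neq (esym H_1_2) (nesym H_1_3).
  have n_2_4 : v2 != v4 := wit_neq (esym H_1_2) (nesym H_1_4).
  have n_2_5 : v2 != v5 := wit_neq (esym H_1_2) (nesym H_1_5).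
  have n_3_4 : v3 != v4 := adj_neq H_3_4.
  have n_4_5 : v4 != v5 := adj_neq H_4_5.
  by rewrite /= !inE (negbTE n_0_1) (negbTE n_0_2) (negbTE n_0_3) (negbTE n_0_4) (negbTE n_0_5) (negbTE n_1_2) (negbTE n_1_3) (negbTE n_1_4) (negbTE n_1_5) (negbTE n_2_3) (negbTE n_2_4) (negbTE n_2_5) (negbTE n_3_4) (negbTE n_3_5) (negbTE n_4_5).
move=> [x Hx] [y Hy].
have E_0_0 : e v0 v0 = false := irr v0.
have E_0_1 : e v0 v1 = true := H_0_1.
have E_0_2 : e v0 v2 = false := negbTE H_0_2.
have E_0_3 : e v0 v3 = false := negbTE H_0_3.
have E_0_4 : e v0 v4 = false := negbTE H_0_4.
have E_0_5 : e v0 v5 = false := negbTE H_0_5.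
have E_1_1 : e v1 v1 = false := irr v1.
have E_1_0 : e v1 v0 = true := (esym H_0_1).
have E_1_2 : e v1 v2 = true := H_1_2.
have E_1_3 : e v1 v3 = false := negbTE H_1_3.
have E_1_4 : e v1 v4 = false := negbTE H_1_4.
have E_1_5 : e v1 v5 = false := negbTE H_1_5.
have E_2_2 : e v2 v2 = false := irr v2.
have E_2_0 : e v2 v0 = false := negbTE (nesym H_0_2).
have E_2_1 : e v2 v1 = true := (esym H_1_2).
have E_2_3 : e v2 v3 = false := negbTE H_2_3.
have E_2_4 : e v2 v4 = false := negbTE H_2_4.
have E_2_5 : e v2 v5 = false := negbTE H_2_5.
have E_3_3 : e v3 v3 = false := irr v3.
have E_3_0 : e v3 v0 = false := negbTE (nesym H_0_3).
have E_3_1 : e v3 v1 = false := negbTE (nesym H_1_3).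
have E_3_2 : e v3 v2 = false := negbTE (nesym H_2_3).
have E_3_4 : e v3 v4 = true := H_3_4.
have E_3_5 : e v3 v5 = false := negbTE H_3_5.
have E_4_4 : e v4 v4 = false := irr v4.
have E_4_0 : e v4 v0 = false := negbTE (nesym H_0_4).
have E_4_1 : e v4 v1 = false := negbTE (nesym H_1_4).
have E_4_2 : e v4 v2 = false := negbTE (nesym H_2_4).
have E_4_3 : e v4 v3 = true := (esym H_3_4).
have E_4_5 : e v4 v5 = true := H_4_5.
have E_5_5 : e v5 v5 = false := irr v5.
have E_5_0 : e v5 v0 = false := negbTE (nesym H_0_5).
have E_5_1 : e v5 v1 = false := negbTE (nesym H_1_5).
have E_5_2 : e v5 v2 = false := negbTE (nesym H_2_5).
have E_5_3 : e v5 v3 = false := negbTE (nesym H_3_5).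
have E_5_4 : e v5 v4 = true := (esym H_4_5).
case: x Hx => [|[|[|[|[|[|x]]]]]] Hx //; case: y Hy => [|[|[|[|[|[|y]]]]]] Hy //;
  by rewrite /= ?E_0_0 ?E_0_1 ?E_0_2 ?E_0_3 ?E_0_4 ?E_0_5 ?E_1_1 ?E_1_0 ?E_1_2 ?E_1_3 ?E_1_4 ?E_1_5 ?E_2_2 ?E_2_0 ?E_2_1 ?E_2_3 ?E_2_4 ?E_2_5 ?E_3_3 ?E_3_0 ?E_3_1 ?E_3_2 ?E_3_4 ?E_3_5 ?E_4_4 ?E_4_0 ?E_4_1 ?E_4_2 ?E_4_3 ?E_4_5 ?E_5_5 ?E_5_0 ?E_5_1 ?E_5_2 ?E_5_3 ?E_5_4.
Qed.

Lemma no_T0 (HF : H_free e T0_rel) v0 v1 v2 v3 v4 v5 v6 v7 v8 :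
  e v0 v1 ->
  e v0 v2 ->
  ~~ e v0 v3 ->
  e v0 v4 ->
  e v0 v5 ->
  ~~ e v0 v6 ->
  ~~ e v0 v7 ->
  ~~ e v0 v8 ->
  ~~ e v1 v2 ->
  e v1 v3 ->
  e v1 v4 ->
  e v1 v5 ->
  ~~ e v1 v6 ->
  ~~ e v1 v7 ->
  ~~ e v1 v8 ->
  ~~ e v2 v3 ->
  ~~ e v2 v4 ->
  ~~ e v2 v5 ->
  e v2 v6 ->
  ~~ e v2 v7 ->
  ~~ e v2 v8 ->
  ~~ e v3 v4 ->
  ~~ e v3 v5 ->
  e v3 v6 ->
  ~~ e v3 v7 ->
  ~~ e v3 v8 ->
  ~~ e v4 v5 ->
  ~~ e v4 v6 ->
  e v4 v7 ->
  ~~ e v4 v8 ->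
  ~~ e v5 v6 ->
  ~~ e v5 v7 ->
  e v5 v8 ->
  e v6 v7 ->
  e v6 v8 ->
  e v7 v8 -> False.
Proof.
move=> H_0_1 H_0_2 H_0_3 H_0_4 H_0_5 H_0_6 H_0_7 H_0_8 H_1_2 H_1_3 H_1_4 H_1_5 H_1_6 H_1_7 H_1_8 H_2_3 H_2_4 H_2_5 H_2_6 H_2_7 H_2_8 H_3_4 H_3_5 H_3_6 H_3_7 H_3_8 H_4_5 H_4_6 H_4_7 H_4_8 H_5_6 H_5_7 H_5_8 H_6_7 H_6_8 H_7_8.
apply: HF.
exists (fun x : 'I_9 => nth v0 [:: v0; v1; v2; v3; v4; v5; v6; v7; v8] x); split.
  apply: inj_nth => //.
  have n_0_1 : v0 != v1 := adj_neq H_0_1.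
  have n_0_2 : v0 != v2 := adj_neq H_0_2.
  have n_0_3 : v0 != v3 := wit_neq H_0_2 (nesym H_2_3).
  have n_0_4 : v0 != v4 := adj_neq H_0_4.
  have n_0_5 : v0 != v5 := adj_neq H_0_5.
  have n_0_6 : v0 != v6 := wit_neq H_0_1 (nesym H_1_6).
  have n_0_7 : v0 != v7 := wit_neq H_0_1 (nesym H_1_7).
  have n_0_8 : v0 != v8 := wit_neq H_0_1 (nesym H_1_8).
  have n_1_2 : v1 != v2 := wit_neq H_1_3 H_2_3.
  have n_1_3 : v1 != v3 := adj_neq H_1_3.
  have n_1_4 : v1 != v4 := adj_neq H_1_4.
  have n_1_5 : v1 != v5 := adj_neq H_1_5.
  have n_1_6 : v1 != v6 := wit_neq (esym H_0_1) (nesym H_0_6).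
  have n_1_7 : v1 != v7 := wit_neq (esym H_0_1) (nesym H_0_7).
  have n_1_8 : v1 != v8 := wit_neq (esym H_0_1) (nesym H_0_8).
  have n_2_3 : v2 != v3 := wit_neq (esym H_0_2) (nesym H_0_3).
  have n_2_4 : v2 != v4 := wit_neq2 (esym H_1_4) (nesym H_1_2).
  have n_2_5 : v2 != v5 := wit_neq2 (esym H_1_5) (nesym H_1_2).
  have n_2_6 : v2 != v6 := adj_neq H_2_6.
  have n_2_7 : v2 != v7 := wit_neq (esym H_0_2) (nesym H_0_7).
  have n_2_8 : v2 != v8 := wit_neq (esym H_0_2) (nesym H_0_8).
  have n_3_4 : v3 != v4 := wit_neq2 (esym H_0_4) (nesym H_0_3).
  have n_3_5 : v3 != v5 := wit_neq2 (esym H_0_5) (nesym H_0_3).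
  have n_3_6 : v3 != v6 := adj_neq H_3_6.
  have n_3_7 : v3 != v7 := wit_neq (esym H_1_3) (nesym H_1_7).
  have n_3_8 : v3 != v8 := wit_neq (esym H_1_3) (nesym H_1_8).
  have n_4_5 : v4 != v5 := wit_neq H_4_7 H_5_7.
  have n_4_6 : v4 != v6 := wit_neq (esym H_0_4) (nesym H_0_6).
  have n_4_7 : v4 != v7 := adj_neq H_4_7.
  have n_4_8 : v4 != v8 := wit_neq (esym H_0_4) (nesym H_0_8).
  have n_5_6 : v5 != v6 := wit_neq (esym H_0_5) (nesym H_0_6).
  have n_5_7 : v5 != v7 := wit_neq (esym H_0_5) (nesym H_0_7).
  have n_5_8 : v5 != v8 := adj_neq H_5_8.
  have n_6_7 : v6 != v7 := adj_neq H_6_7.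
  have n_6_8 : v6 != v8 := adj_neq H_6_8.
  have n_7_8 : v7 != v8 := adj_neq H_7_8.
  by rewrite /= !inE (negbTE n_0_1) (negbTE n_0_2) (negbTE n_0_3) (negbTE n_0_4) (negbTE n_0_5) (negbTE n_0_6) (negbTE n_0_7) (negbTE n_0_8) (negbTE n_1_2) (negbTE n_1_3) (negbTE n_1_4) (negbTE n_1_5) (negbTE n_1_6) (negbTE n_1_7) (negbTE n_1_8) (negbTE n_2_3) (negbTE n_2_4) (negbTE n_2_5) (negbTE n_2_6) (negbTE n_2_7) (negbTE n_2_8) (negbTE n_3_4) (negbTE n_3_5) (negbTE n_3_6) (negbTE n_3_7) (negbTE n_3_8) (negbTE n_4_5) (negbTE n_4_6) (negbTE n_4_7) (negbTE n_4_8) (negbTE n_5_6) (negbTE n_5_7) (negbTE n_5_8) (negbTE n_6_7) (negbTE n_6_8) (negbTE n_7_8).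
move=> [x Hx] [y Hy].
have E_0_0 : e v0 v0 = false := irr v0.
have E_0_1 : e v0 v1 = true := H_0_1.
have E_0_2 : e v0 v2 = true := H_0_2.
have E_0_3 : e v0 v3 = false := negbTE H_0_3.
have E_0_4 : e v0 v4 = true := H_0_4.
have E_0_5 : e v0 v5 = true := H_0_5.
have E_0_6 : e v0 v6 = false := negbTE H_0_6.
have E_0_7 : e v0 v7 = false := negbTE H_0_7.
have E_0_8 : e v0 v8 = false := negbTE H_0_8.
have E_1_1 : e v1 v1 = false := irr v1.
have E_1_0 : e v1 v0 = true := (esym H_0_1).
have E_1_2 : e v1 v2 = false := negbTE H_1_2.
have E_1_3 : e v1 v3 = true := H_1_3.
have E_1_4 : e v1 v4 = true := H_1_4.
have E_1_5 : e v1 v5 = true := H_1_5.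
have E_1_6 : e v1 v6 = false := negbTE H_1_6.
have E_1_7 : e v1 v7 = false := negbTE H_1_7.
have E_1_8 : e v1 v8 = false := negbTE H_1_8.
have E_2_2 : e v2 v2 = false := irr v2.
have E_2_0 : e v2 v0 = true := (esym H_0_2).
have E_2_1 : e v2 v1 = false := negbTE (nesym H_1_2).
have E_2_3 : e v2 v3 = false := negbTE H_2_3.
have E_2_4 : e v2 v4 = false := negbTE H_2_4.
have E_2_5 : e v2 v5 = false := negbTE H_2_5.
have E_2_6 : e v2 v6 = true := H_2_6.
have E_2_7 : e v2 v7 = false := negbTE H_2_7.
have E_2_8 : e v2 v8 = false := negbTE H_2_8.
have E_3_3 : e v3 v3 = false := irr v3.
have E_3_0 : e v3 v0 = false := negbTE (nesym H_0_3).
have E_3_1 : e v3 v1 = true := (esym H_1_3).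
have E_3_2 : e v3 v2 = false := negbTE (nesym H_2_3).
have E_3_4 : e v3 v4 = false := negbTE H_3_4.
have E_3_5 : e v3 v5 = false := negbTE H_3_5.
have E_3_6 : e v3 v6 = true := H_3_6.
have E_3_7 : e v3 v7 = false := negbTE H_3_7.
have E_3_8 : e v3 v8 = false := negbTE H_3_8.
have E_4_4 : e v4 v4 = false := irr v4.
have E_4_0 : e v4 v0 = true := (esym H_0_4).
have E_4_1 : e v4 v1 = true := (esym H_1_4).
have E_4_2 : e v4 v2 = false := negbTE (nesym H_2_4).
have E_4_3 : e v4 v3 = false := negbTE (nesym H_3_4).
have E_4_5 : e v4 v5 = false := negbTE H_4_5.
have E_4_6 : e v4 v6 = false := negbTE H_4_6.
have E_4_7 : e v4 v7 = true := H_4_7.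
have E_4_8 : e v4 v8 = false := negbTE H_4_8.
have E_5_5 : e v5 v5 = false := irr v5.
have E_5_0 : e v5 v0 = true := (esym H_0_5).
have E_5_1 : e v5 v1 = true := (esym H_1_5).
have E_5_2 : e v5 v2 = false := negbTE (nesym H_2_5).
have E_5_3 : e v5 v3 = false := negbTE (nesym H_3_5).
have E_5_4 : e v5 v4 = false := negbTE (nesym H_4_5).
have E_5_6 : e v5 v6 = false := negbTE H_5_6.
have E_5_7 : e v5 v7 = false := negbTE H_5_7.
have E_5_8 : e v5 v8 = true := H_5_8.
have E_6_6 : e v6 v6 = false := irr v6.
have E_6_0 : e v6 v0 = false := negbTE (nesym H_0_6).
have E_6_1 : e v6 v1 = false := negbTE (nesym H_1_6).
have E_6_2 : e v6 v2 = true := (esym H_2_6).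
have E_6_3 : e v6 v3 = true := (esym H_3_6).
have E_6_4 : e v6 v4 = false := negbTE (nesym H_4_6).
have E_6_5 : e v6 v5 = false := negbTE (nesym H_5_6).
have E_6_7 : e v6 v7 = true := H_6_7.
have E_6_8 : e v6 v8 = true := H_6_8.
have E_7_7 : e v7 v7 = false := irr v7.
have E_7_0 : e v7 v0 = false := negbTE (nesym H_0_7).
have E_7_1 : e v7 v1 = false := negbTE (nesym H_1_7).
have E_7_2 : e v7 v2 = false := negbTE (nesym H_2_7).
have E_7_3 : e v7 v3 = false := negbTE (nesym H_3_7).
have E_7_4 : e v7 v4 = true := (esym H_4_7).
have E_7_5 : e v7 v5 = false := negbTE (nesym H_5_7).
have E_7_6 : e v7 v6 = true := (esym H_6_7).
have E_7_8 : e v7 v8 = true := H_7_8.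
have E_8_8 : e v8 v8 = false := irr v8.
have E_8_0 : e v8 v0 = false := negbTE (nesym H_0_8).
have E_8_1 : e v8 v1 = false := negbTE (nesym H_1_8).
have E_8_2 : e v8 v2 = false := negbTE (nesym H_2_8).
have E_8_3 : e v8 v3 = false := negbTE (nesym H_3_8).
have E_8_4 : e v8 v4 = false := negbTE (nesym H_4_8).
have E_8_5 : e v8 v5 = true := (esym H_5_8).
have E_8_6 : e v8 v6 = true := (esym H_6_8).
have E_8_7 : e v8 v7 = true := (esym H_7_8).
case: x Hx => [|[|[|[|[|[|[|[|[|x]]]]]]]]] Hx //; case: y Hy => [|[|[|[|[|[|[|[|[|y]]]]]]]]] Hy //;
  by rewrite /= ?E_0_0 ?E_0_1 ?E_0_2 ?E_0_3 ?E_0_4 ?E_0_5 ?E_0_6 ?E_0_7 ?E_0_8 ?E_1_1 ?E_1_0 ?E_1_2 ?E_1_3 ?E_1_4 ?E_1_5 ?E_1_6 ?E_1_7 ?E_1_8 ?E_2_2 ?E_2_0 ?E_2_1 ?E_2_3 ?E_2_4 ?E_2_5 ?E_2_6 ?E_2_7 ?E_2_8 ?E_3_3 ?E_3_0 ?E_3_1 ?E_3_2 ?E_3_4 ?E_3_5 ?E_3_6 ?E_3_7 ?E_3_8 ?E_4_4 ?E_4_0 ?E_4_1 ?E_4_2 ?E_4_3 ?E_4_5 ?E_4_6 ?E_4_7 ?E_4_8 ?E_5_5 ?E_5_0 ?E_5_1 ?E_5_2 ?E_5_3 ?E_5_4 ?E_5_6 ?E_5_7 ?E_5_8 ?E_6_6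 ?E_6_0 ?E_6_1 ?E_6_2 ?E_6_3 ?E_6_4 ?E_6_5 ?E_6_7 ?E_6_8 ?E_7_7 ?E_7_0 ?E_7_1 ?E_7_2 ?E_7_3 ?E_7_4 ?E_7_5 ?E_7_6 ?E_7_8 ?E_8_8 ?E_8_0 ?E_8_1 ?E_8_2 ?E_8_3 ?E_8_4 ?E_8_5 ?E_8_6 ?E_8_7.
Qed.

Lemma no_pent s (HF : H_free e (@pentagon_rel s)) (a : T) (fb fc : 'I_s -> T) :
  1 < s ->
  (forall i, e a (fb i)) -> (forall i, ~~ e a (fc i)) ->
  (forall i j, i != j -> ~~ e (fb i) (fb j)) ->
  (forall i j, i != j -> e (fc i) (fc j)) ->
  (forall i j, e (fb i) (fc j) = (i == j)) -> False.
Proof.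
move=> s2 Hab Hac Hbb Hcc Hbc; apply: HF.
pose f (x : option ('I_s + 'I_s)) :=
  match x with None => a | Some (inl i) => fb i | Some (inr i) => fc i end.
have other : forall i : 'I_s, exists j, j != i.
  move=> i; case: (eqVneq i (Ordinal (ltnW s2))) => [->|ne].
    by exists (Ordinal s2); apply/eqP => /(congr1 val).
  by exists (Ordinal (ltnW s2)); rewrite eq_sym.
have Ebc : forall i j, i != j -> ~~ e (fb i) (fc j) by move=> i j ne; rewrite Hbc.
exists f; split.
  move=> [[x|x]|] [[y|y]|] //=.
  - case: (eqVneq x y) => [->//|ne Exy].
    have ne' : y != x by rewrite eq_sym.
    by move: (Hbc x x) (Ebc _ _ ne'); rewrite eqxx Exy => ->.
  - by move=> Exy; move: (Hab x) (Hac y); rewrite Exy => ->.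
  - by move=> Exy; move: (Hab x); rewrite Exy irr.
  - by move=> Exy; move: (Hab y) (Hac x); rewrite -Exy => ->.
  - case: (eqVneq x y) => [->//|ne Exy].
    by move: (Hcc _ _ ne); rewrite Exy irr.
  - move=> Exy; have [j nj] := other x.
    by move: (Hab j) (Ebc _ _ nj); rewrite Exy sym => ->.
  - by move=> Exy; move: (Hab y); rewrite -Exy irr.
  - move=> Exy; have [j nj] := other y.
    by move: (Hab j) (Ebc _ _ nj); rewrite -Exy sym => ->.
move=> [[x|x]|] [[y|y]|] //=; rewrite /pentagon_rel /=.
- by case: (eqVneq x y) => [->|ne]; rewrite ?irr // (negbTE (Hbb _ _ ne)).
- by rewrite Hbc orbF.
- by rewrite sym Hab.
- by rewrite sym Hbc.
- case: (eqVneq x y) => [->|ne]; first by rewrite irr.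
  by rewrite Hcc.
- by rewrite sym (negbTE (Hac x)).
- by rewrite Hab.
- by rewrite (negbTE (Hac y)).
Qed.

End Basic.
Arguments no_C4 {T e} sym irr HF v0 v1 v2 v3.
Arguments no_C6 {T e} sym irr HF v0 v1 v2 v3 v4 v5.
Arguments no_C7 {T e} sym irr HF v0 v1 v2 v3 v4 v5 v6.
Arguments no_2P3 {T e} sym irr HF v0 v1 v2 v3 v4 v5.
Arguments no_T0 {T e} sym irr HF v0 v1 v2 v3 v4 v5 v6 v7 v8.

Section Main.
Variables (T : finType) (e : rel T) (t : nat) (A : {set T}) (B C : 'I_t -> {set T}).
Hypothesis sym : symmetric e.
Hypothesis irr : irreflexive e.
Hypothesis t3 : 3 <= t.
Hypothesis HP3 : H_free e twoP3.
Hypothesis HC4 : H_free e (@cycle_rel 4).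
Hypothesis HC6 : H_free e (@cycle_rel 6).
Hypothesis HC7 : H_free e (@cycle_rel 7).
Hypothesis HT0 : H_free e T0_rel.
Hypothesis Hpent : H_free e (@pentagon_rel t.+1).
Hypothesis Hpart : partitions (parts_of A B C).
Hypothesis HAn : A != set0.
Hypothesis HBn : forall i, B i != set0.
Hypothesis HCn : forall i, C i != set0.
Hypothesis HA2 : forall a, a \in A -> exists i j, [/\ i != j,
          [exists b in B i, e a b] & [exists b in B j, e a b]].
Hypothesis HAC : forall i, anticomplete e A (C i).
Hypothesis HBB : forall i j, i != j -> anticomplete e (B i) (B j).
Hypothesis HCC : forall i j, i != j -> complete e (C i) (C j).
Hypothesis HBC : forall i j, i != j -> anticomplete e (B i) (C j).
Hypothesis HBi : forall i, (forall b, b \in B i ->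
                [exists a in A, e b a] /\ [exists c in C i, e b c])
          /\ (forall c, c \in C i -> [exists b in B i, e c b]).

Lemma avoid (s : seq 'I_t) : size s < t -> exists k, k \notin s.
Proof.
move=> H; case: (pickP [pred k | k \notin s]) => [k Hk|H0]; first by exists k.
have : size (enum 'I_t) <= size s.
  apply: uniq_leq_size (enum_uniq _) _ => x _.
  by have := H0 x; rewrite /= => /negbFE.
by rewrite size_enum_ord leqNgt H.
Qed.

Lemma other_idx (i : 'I_t) : exists j, j != i.
Proof.
have [k] := @avoid [:: i] (leq_trans (isT : 1 < 3) t3).
by rewrite inE => Hk; exists k.
Qed.

Lemma third_idx (i j : 'I_t) : exists k, k != i /\ k != j.
Proof.
have [k] := @avoid [:: i; j] t3.
by rewrite !inE negb_or => /andP[]; exists k.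
Qed.

Lemma fourth_idx (i j k : 'I_t) : 3 < t -> exists m, [/\ m != i, m != j & m != k].
Proof.
move=> t4; have [m] := @avoid [:: i; j; k] t4.
by rewrite !inE !negb_or => /and3P[]; exists m.
Qed.

Lemma four_dist (p q j k : 'I_t) : p != q -> p != j -> p != k -> q != j -> q != k -> j != k -> 3 < t.
Proof.
move=> pq pj pk qj qk jk.
have := max_card (mem [:: p; q; j; k]); rewrite card_ord.
have -> : #|[:: p; q; j; k]| = size [:: p; q; j; k].
  by apply/card_uniqP; rewrite /= !inE !negb_or pq pj pk qj qk jk.
by [].
Qed.

Lemma cnt1 (P : pred 'I_t) i : P i -> 0 < count P (enum 'I_t).
Proof. by move=> Pi; rewrite -has_count; apply/hasP; exists i; rewrite ?mem_enum. Qed.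

Lemma cnt2 (P : pred 'I_t) i j : i != j -> P i -> P j -> 1 < count P (enum 'I_t).
Proof.
move=> ij Pi Pj; rewrite -size_filter.
have -> : 2 = size [:: i; j] by [].
apply: uniq_leq_size; first by rewrite /= inE ij.
by move=> x; rewrite !inE mem_filter mem_enum andbT => /orP[]/eqP->.
Qed.

Lemma part_eq x : (x \in A) + (count (fun i => x \in B i) (enum 'I_t)
   + count (fun i => x \in C i) (enum 'I_t)) = 1.
Proof. by have := Hpart x; rewrite /parts_of /= count_cat !count_map. Qed.

Lemma AnB x i : x \in A -> x \in B i -> False.
Proof.
move=> Ha Hb; have := part_eq x; rewrite Ha.
have := @cnt1 (fun i => x \in B i) i Hb; lia.
Qed.
Lemma AnC x i : x \in A -> x \in C i -> False.
Proof.
move=> Ha Hb; have := part_eq x; rewrite Ha.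
have := @cnt1 (fun i => x \in C i) i Hb; lia.
Qed.
Lemma BnC x i j : x \in B i -> x \in C j -> False.
Proof.
move=> Ha Hb; have := part_eq x.
have := @cnt1 (fun i => x \in C i) j Hb; have := @cnt1 (fun k => x \in B k) i Ha; lia.
Qed.
Lemma BBeq x i j : x \in B i -> x \in B j -> i = j.
Proof.
move=> Ha Hb; case: (eqVneq i j) => // ne; have := part_eq x.
have := @cnt2 (fun k => x \in B k) i j ne Ha Hb; lia.
Qed.
Lemma CCeq x i j : x \in C i -> x \in C j -> i = j.
Proof.
move=> Ha Hb; case: (eqVneq i j) => // ne; have := part_eq x.
have := @cnt2 (fun k => x \in C k) i j ne Ha Hb; lia.
Qed.
Lemma cover x : [\/ x \in A, exists i, x \in B i | exists i, x \in C i].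
Proof.
have := part_eq x.
have [Ha _|Ha] := boolP (x \in A); first exact: Or31.
have [/hasP[i _ Hi] _|HB] := boolP (has (fun i => x \in B i) (enum 'I_t)).
  by apply: Or32; exists i.
have [/hasP[i _ Hi] _|HC] := boolP (has (fun i => x \in C i) (enum 'I_t)).
  by apply: Or33; exists i.
by move: HB HC; rewrite !has_count; lia.
Qed.

Lemma neqAB x y i : x \in A -> y \in B i -> x != y.
Proof. by move=> Hx Hy; apply/eqP => E; subst; apply: (AnB Hx Hy). Qed.
Lemma neqAC x y i : x \in A -> y \in C i -> x != y.
Proof. by move=> Hx Hy; apply/eqP => E; subst; apply: (AnC Hx Hy). Qed.
Lemma neqBC x y i j : x \in B i -> y \in C j -> x != y.
Proof. by move=> Hx Hy; apply/eqP => E; subst; apply: (BnC Hx Hy). Qed.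
Lemma neqBB x y i j : x \in B i -> y \in B j -> i != j -> x != y.
Proof. by move=> Hx Hy ij; apply/eqP => E; subst; move: ij; rewrite (BBeq Hx Hy) eqxx. Qed.
Lemma neqCC x y i j : x \in C i -> y \in C j -> i != j -> x != y.
Proof. by move=> Hx Hy ij; apply/eqP => E; subst; move: ij; rewrite (CCeq Hx Hy) eqxx. Qed.

Lemma nAC x y i : x \in A -> y \in C i -> ~~ e x y.
Proof. exact: HAC. Qed.
Lemma nBB x y i j : x \in B i -> y \in B j -> i != j -> ~~ e x y.
Proof. by move=> Hx Hy ij; apply: (HBB ij). Qed.
Lemma nBC x y i j : x \in B i -> y \in C j -> i != j -> ~~ e x y.
Proof. by move=> Hx Hy ij; apply: (HBC ij). Qed.
Lemma yCC x y i j : x \in C i -> y \in C j -> i != j -> e x y.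
Proof. by move=> Hx Hy ij; apply: (HCC ij). Qed.

Ltac ineq := solve [assumption | rewrite eq_sym; assumption].

Ltac adj0 :=
  match goal with
  | |- is_true (~~ e _ _) => first
     [ assumption | apply: (nesym sym); assumption
     | eapply nAC; eassumption
     | apply: (nesym sym); eapply nAC; eassumption
     | eapply nBB; [eassumption|eassumption|ineq]
     | eapply nBC; [eassumption|eassumption|ineq]
     | apply: (nesym sym); eapply nBC; [eassumption|eassumption|ineq] ]
  | |- is_true (e _ _) => first
     [ assumption | apply: (esym sym); assumption
     | eapply yCC; [eassumption|eassumption|ineq] ]
  end.

Ltac neq0 :=
  match goal with
  | |- is_true (?x != ?y) => first
     [ ineq
     | eapply neqAB; eassumption
     | rewrite eq_sym; eapply neqAB; eassumption
     | eapply neqAC; eassumption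
     | rewrite eq_sym; eapply neqAC; eassumption
     | eapply neqBC; eassumption
     | rewrite eq_sym; eapply neqBC; eassumption
     | eapply neqBB; [eassumption|eassumption|ineq]
     | eapply neqCC; [eassumption|eassumption|ineq]
     | match goal with H : is_true (e x ?z) |- _ => apply: (wit_neq H); adj0 end
     | match goal with H : is_true (e ?z x) |- _ => apply: (wit_neq (esym sym H)); adj0 end
     | match goal with H : is_true (e y ?z) |- _ => apply: (wit_neq2 H); adj0 end
     | match goal with H : is_true (e ?z y) |- _ => apply: (wit_neq2 (esym sym H)); adj0 end ]
  end.

Ltac adj_extra := fail.
Ltac adj := first [adj0 | adj_extra].
Ltac gs := first [adj | neq0].

Lemma Bne i : exists b, b \in B i.
Proof. by have /set0Pn := HBn i. Qed.
Lemma Cne i : exists c, c \in C i.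
Proof. by have /set0Pn := HCn i. Qed.
Lemma bA i b : b \in B i -> exists a, a \in A /\ e a b.
Proof. by move=> Hb; have [/existsP[a /andP[Ha E]] _] := (HBi i).1 b Hb; exists a; rewrite sym. Qed.
Lemma bC i b : b \in B i -> exists c, c \in C i /\ e b c.
Proof. by move=> Hb; have [_ /existsP[c /andP[Hc E]]] := (HBi i).1 b Hb; exists c. Qed.
Lemma cB i c : c \in C i -> exists b, b \in B i /\ e b c.
Proof. by move=> Hc; have /existsP[b /andP[Hb E]] := (HBi i).2 c Hc; exists b; rewrite sym. Qed.
Lemma two_parts a : a \in A -> exists p q x y, [/\ p != q, x \in B p, y \in B q, e a x & e a y].
Proof.
move=> Ha; have [p [q [pq /existsP[x /andP[Hx Ex]] /existsP[y /andP[Hy Ey]]]]] := HA2 Ha.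
by exists p, q, x, y.
Qed.
Lemma other_part a i : a \in A -> exists m x, [/\ m != i, x \in B m & e a x].
Proof.
move=> Ha; have [p [q [x [y [pq Hx Hy Ex Ey]]]]] := two_parts Ha.
case: (eqVneq p i) => [E|pi]; last by exists p, x.
by exists q, y; split => //; rewrite -E eq_sym.
Qed.



Lemma nbr_dec a (P : pred 'I_t) :
  (exists k b, [/\ P k, b \in B k & e a b]) \/ (forall k b, P k -> b \in B k -> ~~ e a b).
Proof.
case: (boolP [exists k, [exists b in B k, P k && e a b]]) => [/existsP[k /existsP[b /and3P[Hb Pk E]]]|H].
  by left; exists k, b.
right => k b Pk Hb; apply/negP => E; apply: (negP H); apply/existsP; exists k.
by apply/existsP; exists b; rewrite Hb Pk E.
Qed.

Lemma C_clique i c1 c2 : c1 \in C i -> c2 \in C i -> c1 != c2 -> e c1 c2.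
Proof.
move=> Hc1 Hc2 n12; apply/negPn/negP => N12.
have [j nji] := other_idx i.
have [cj Hcj] := Cne j.
have noboth : forall b, b \in B i -> e b c1 -> e b c2 -> False.
  by move=> b Hb E1 E2; apply: (no_C4 sym irr HC4 b c1 cj c2); gs.
have [b1 [Hb1 E11]] := cB Hc1.
have [b2 [Hb2 E22]] := cB Hc2.
have N12' : ~~ e b1 c2 by apply/negP => E; apply: (noboth b1).
have N21 : ~~ e b2 c1 by apply/negP => E; apply: (noboth b2).
case: (boolP (e b1 b2)) => [Eb|Nb].
- have clos : forall a, a \in A -> (e a b1 = e a b2).
    move=> a Ha; apply/idP/idP => [Ea1|Ea2]; apply/negPn/negP => Na.
    + have [m [bm [nmi Hbm Eabm]]] := other_part i Ha.
      have [cm [Hcm Ebmcm]] := bC Hbm.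
      by apply: (no_C6 sym irr HC6 a b1 b2 c2 cm bm); gs.
    + have [m [bm [nmi Hbm Eabm]]] := other_part i Ha.
      have [cm [Hcm Ebmcm]] := bC Hbm.
      by apply: (no_C6 sym irr HC6 a b2 b1 c1 cm bm); gs.
  have [a [Ha Eab1]] := bA Hb1.
  have Eab2 : e a b2 by rewrite -clos.
  have [j' [bj [nj'i Hbj Eabj]]] := other_part i Ha.
  have [cj' [Hcj' Ebjcj]] := bC Hbj.
  case: (nbr_dec a [pred k | (k != i) && (k != j')]) =>
     [[k [bk [/andP[ki kj] Hbk Eabk]]]|Hno].
    have [ck [Hck Ebkck]] := bC Hbk.
    by apply: (no_T0 sym irr HT0 cj' ck bj bk c1 c2 a b1 b2); gs.
  have [k [ki kj]] := third_idx i j'.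
  have [bk Hbk] := Bne k.
  have [ak [Hak Eakbk]] := bA Hbk.
  have [ck [Hck Ebkck]] := bC Hbk.
  have Nabk : ~~ e a bk by apply: (Hno k) => //; rewrite /= ki kj.
  case: (boolP (e ak b1)) => [Eak1|Nak1].
  + have Eak2 : e ak b2 by rewrite -clos.
    case: (nbr_dec ak [pred m | (m != i) && (m != k)]) =>
       [[m [bm [/andP[mi mk] Hbm Eakbm]]]|Hno2].
      have [cm [Hcm Ebmcm]] := bC Hbm.
      by apply: (no_T0 sym irr HT0 ck cm bk bm c1 c2 ak b1 b2); gs.
    have Nakbj : ~~ e ak bj by apply: (Hno2 j') => //; rewrite /= nj'i eq_sym kj.
    case: (boolP (e a ak)) => [Eaak|Naak].
      by apply: (no_C6 sym irr HC6 a bj cj' ck bk ak); gs.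
    by apply: (no_C7 sym irr HC7 a bj cj' ck bk ak b1); gs.
  + have Nak2 : ~~ e ak b2 by rewrite -clos.
    case: (boolP (e a ak)) => [Eaak|Naak].
      by apply: (no_C6 sym irr HC6 a b1 c1 ck bk ak); gs.
    case: (boolP (e ak bj)) => [Eakbj|Nakbj].
      by apply: (no_C7 sym irr HC7 a b1 c1 ck bk ak bj); gs.
    have [m [z [mk Hz Eakz]]] := other_part k Hak.
    case: (boolP (e a z)) => [Eaz|Naz].
      case: (eqVneq m i) => [Emi|mi].
        subst m; by apply: (no_C7 sym irr HC7 a bj cj' ck bk ak z); gs.
      by apply: (no_C7 sym irr HC7 a b1 c1 ck bk ak z); gs.
    case: (eqVneq m i) => [Emi|mi].
      subst m; by apply: (no_2P3 sym irr HP3 a bj cj' z ak bk); gs.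
    by apply: (no_2P3 sym irr HP3 c2 b2 a bk ak z); gs.
- case: (boolP [exists a in A, e a b1 && e a b2]) => [/existsP[a /and3P[Ha Ea1 Ea2]]|Hno].
    by apply: (no_C6 sym irr HC6 a b1 c1 cj c2 b2); gs.
  have noc : forall a, a \in A -> e a b1 -> e a b2 -> False.
    by move=> a Ha E1 E2; apply: (negP Hno); apply/existsP; exists a; rewrite Ha E1 E2.
  have [a1 [Ha1 E1]] := bA Hb1; have [a2 [Ha2 E2]] := bA Hb2.
  have N1 : ~~ e a1 b2 by apply/negP => E; apply: (noc a1).
  have N2 : ~~ e a2 b1 by apply/negP => E; apply: (noc a2).
  case: (boolP (e a1 a2)) => [E12|N12a].
    by apply: (no_C7 sym irr HC7 a1 b1 c1 cj c2 b2 a2); gs.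
  by apply: (no_2P3 sym irr HP3 a1 b1 c1 a2 b2 c2); gs.
Qed.

Ltac adj_extra ::= eapply C_clique; [eassumption|eassumption|neq0].

Lemma L1 a a' p q i j : a \in A -> a' \in A -> p \in B i -> q \in B j -> i != j ->
  e a a' -> e a p -> e a' q -> ~~ e a q -> e a' p.
Proof.
move=> Ha Ha' Hp Hq ij Eaa Eap Eaq Naq; apply/negPn/negP => N.
have [cp [Hcp Ep]] := bC Hp; have [cq [Hcq Eq]] := bC Hq.
by apply: (no_C6 sym irr HC6 a p cp cq q a'); gs.
Qed.

Lemma pent_contra a i b1 b2 c1 c2 : a \in A -> b1 \in B i -> b2 \in B i ->
  c1 \in C i -> c2 \in C i ->
  e a b1 -> e a b2 -> ~~ e b1 b2 -> e b1 c1 -> e b2 c2 -> ~~ e b1 c2 -> ~~ e b2 c1 ->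
  (forall k b, k != i -> b \in B k -> e a b) -> False.
Proof.
move=> Ha Hb1 Hb2 Hc1 Hc2 Ea1 Ea2 Nb E1 E2 N12 N21 Hall.
pose pb (k : 'I_t) := if k == i then b1 else odflt b1 [pick b in B k].
have Hpb k : pb k \in B k.
  rewrite /pb; case: eqP => [->//|_]; case: pickP => [b /= Hb //|H0].
  by have [b Hb] := Bne k; move: (H0 b); rewrite /= Hb.
pose pc (k : 'I_t) := if k == i then c1 else odflt c1 [pick c in C k | e (pb k) c].
have Hpc k : pc k \in C k /\ e (pb k) (pc k).
  rewrite /pc; case: eqP => [->|_]; first by rewrite /pb eqxx.
  case: pickP => [c /= /andP[Hc Ec] //|H0].
  by have [c [Hc Ec]] := bC (Hpb k); move: (H0 c); rewrite /= Hc Ec.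
have Eapb k : e a (pb k).
  by case: (eqVneq k i) => [->|ki]; [rewrite /pb eqxx | apply: Hall (Hpb k)].
have n12 : c1 != c2 by gs.
pose fb (x : 'I_t.+1) := match unlift ord_max x with Some k => pb k | None => b2 end.
pose fc (x : 'I_t.+1) := match unlift ord_max x with Some k => pc k | None => c2 end.
have s2 : 1 < t.+1 by rewrite ltnS (leq_trans _ t3).
apply: (@no_pent _ _ sym irr t.+1 Hpent a fb fc s2).
- by move=> x; case: (unliftP ord_max x) => [k ->|->]; rewrite /fb ?liftK ?unlift_none.
- move=> x; case: (unliftP ord_max x) => [k ->|->]; rewrite /fc ?liftK ?unlift_none.
    by have [Hk _] := Hpc k; gs.
  by gs.
- move=> x y; case: (unliftP ord_max x) => [k ->|->]; case: (unliftP ord_max y) => [l ->|->]; rewrite /fb ?liftK ?unlift_none.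
  + rewrite (inj_eq (@lift_inj _ ord_max)) => kl.
    by have := Hpb k; have := Hpb l => Hl Hk; gs.
  + move=> _; case: (eqVneq k i) => [->|ki]; first by rewrite /pb eqxx.
    by have := Hpb k => Hk; gs.
  + move=> _; case: (eqVneq l i) => [->|li]; first by rewrite /pb eqxx; gs.
    by have := Hpb l => Hl; gs.
  + by rewrite eqxx.
- move=> x y; case: (unliftP ord_max x) => [k ->|->]; case: (unliftP ord_max y) => [l ->|->]; rewrite /fc ?liftK ?unlift_none.
  + rewrite (inj_eq (@lift_inj _ ord_max)) => kl.
    by have [Hk _] := Hpc k; have [Hl _] := Hpc l; gs.
  + move=> _; case: (eqVneq k i) => [->|ki]; first by rewrite /pc eqxx; gs.
    by have [Hk _] := Hpc k; gs.
  + move=> _; case: (eqVneq l i) => [->|li]; first by rewrite /pc eqxx; gs.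
    by have [Hl _] := Hpc l; gs.
  + by rewrite eqxx.
- move=> x y; case: (unliftP ord_max x) => [k ->|->]; case: (unliftP ord_max y) => [l ->|->]; rewrite /fb /fc ?liftK ?unlift_none.
  + rewrite (inj_eq (@lift_inj _ ord_max)).
    case: (eqVneq k l) => [->|kl]; first by have [_ ->] := Hpc l.
    by have [Hl _] := Hpc l; have := Hpb k => Hk; apply/negbTE; gs.
  + rewrite eq_sym (negbTE (neq_lift _ _)).
    case: (eqVneq k i) => [->|ki]; first by rewrite /pb eqxx; apply/negbTE.
    by have := Hpb k => Hk; apply/negbTE; gs.
  + rewrite (negbTE (neq_lift _ _)).
    case: (eqVneq l i) => [->|li]; first by rewrite /pc eqxx; apply/negbTE.
    by have [Hl _] := Hpc l; apply/negbTE; gs.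
  + by rewrite eqxx.
Qed.

Lemma B_clique i b1 b2 : b1 \in B i -> b2 \in B i -> b1 != b2 -> e b1 b2.
Proof.
move=> Hb1 Hb2 n12; apply/negPn/negP => Nb.
have [c1 [Hc1 E1]] := bC Hb1; have [c2 [Hc2 E2]] := bC Hb2.
case: (boolP [exists a in A, e a b1 && e a b2]) => [/existsP[a /and3P[Ha Ea1 Ea2]]|Hno].
- have nocC : forall c, c \in C i -> e b1 c -> e b2 c -> False.
    by move=> c Hc Ec1 Ec2; apply: (no_C4 sym irr HC4 a b1 c b2); gs.
  have N12 : ~~ e b1 c2 by apply/negP => E; apply: (nocC c2).
  have N21 : ~~ e b2 c1 by apply/negP => E; apply: (nocC c1).
  case: (boolP [exists k, [exists b in B k, (k != i) && ~~ e a b]]) =>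
    [/existsP[k /existsP[bk /and3P[Hbk ki Nabk]]]|Hall].
    have [j [ji jk]] := third_idx i k.
    have [cj Hcj] := Cne j; have [ck [Hck Ebkck]] := bC Hbk.
    by apply: (no_2P3 sym irr HP3 b1 a b2 cj ck bk); gs.
  apply: (pent_contra Ha Hb1 Hb2 Hc1 Hc2 Ea1 Ea2 Nb E1 E2 N12 N21).
  move=> k b ki Hb; apply/negPn/negP => N; apply: (negP Hall).
  by apply/existsP; exists k; apply/existsP; exists b; rewrite Hb ki N.
have noc : forall a, a \in A -> e a b1 -> e a b2 -> False.
  by move=> a Ha Ea1 Ea2; apply: (negP Hno); apply/existsP; exists a; rewrite Ha Ea1 Ea2.
have [a1 [Ha1 Ea1]] := bA Hb1; have [a2 [Ha2 Ea2]] := bA Hb2.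
have N1 : ~~ e a1 b2 by apply/negP => E; apply: (noc a1).
have N2 : ~~ e a2 b1 by apply/negP => E; apply: (noc a2).
case: (boolP [exists c in C i, e b1 c && e b2 c]) => [/existsP[c /and3P[Hc Ec1 Ec2]]|HnoC].
- case: (boolP (e a1 a2)) => [E12|N12a].
  + have [j [x [ji Hx Ex]]] := other_part i Ha1.
    have Ea2x : e a2 x := L1 Ha1 Ha2 Hx Hb2 ji E12 Ex Ea2 N1.
    have [cx [Hcx Excx]] := bC Hx.
    case: (nbr_dec a1 [pred k | (k != i) && (k != j)]) => [[k [y [/andP[ki kj] Hy Ey]]]|Hno1].
      have Ea2y : e a2 y := L1 Ha1 Ha2 Hy Hb2 ki E12 Ey Ea2 N1.
      have [cy [Hcy Eycy]] := bC Hy.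
      by apply: (no_T0 sym irr HT0 a1 a2 b1 b2 x y c cx cy); gs.
    have [k [ki kj]] := third_idx i j.
    have [bk Hbk] := Bne k.
    have [ak [Hak Eakbk]] := bA Hbk; have [ck [Hck Ebkck]] := bC Hbk.
    have Na1k : ~~ e a1 bk by apply: (Hno1 k) => //; rewrite /= ki kj.
    have Na2k : ~~ e a2 bk.
      apply/negP => E; move/negP: Na1k; apply.
      by apply: (L1 Ha2 Ha1 Hbk Hb1 ki (esym sym E12) E Ea1 N2).
    case: (boolP (e ak a1)) => [Ek1|Nk1].
      have Ekb1 : e ak b1 by apply: (L1 Ha1 Hak Hb1 Hbk _ (esym sym Ek1) Ea1 Eakbk Na1k); gs.
      have Ekx : e ak x by apply: (L1 Ha1 Hak Hx Hbk _ (esym sym Ek1) Ex Eakbk Na1k); gs.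
      have Nkb2 : ~~ e ak b2 by apply/negP => E; apply: (noc ak).
      case: (boolP (e ak a2)) => [Ek2|Nk2].
        move/negP: Nkb2; apply.
        by apply: (L1 Ha2 Hak Hb2 Hbk _ (esym sym Ek2) Ea2 Eakbk Na2k); gs.
      by apply: (no_C7 sym irr HC7 ak bk ck c b2 a2 x); gs.
    case: (boolP (e ak a2)) => [Ek2|Nk2].
      have Ekb2 : e ak b2 by apply: (L1 Ha2 Hak Hb2 Hbk _ (esym sym Ek2) Ea2 Eakbk Na2k); gs.
      have Ekx : e ak x by apply: (L1 Ha2 Hak Hx Hbk _ (esym sym Ek2) Ea2x Eakbk Na2k); gs.
      have Nkb1 : ~~ e ak b1 by apply/negP => E; apply: (noc ak).
      by apply: (no_C7 sym irr HC7 ak bk ck c b1 a1 x); gs.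
    case: (boolP (e ak x)) => [Ekx|Nkx].
      case: (boolP (e ak b1)) => [Ekb1|Nkb1].
        have Nkb2 : ~~ e ak b2 by apply/negP => E; apply: (noc ak).
        by apply: (no_C7 sym irr HC7 a2 b2 c ck bk ak x); gs.
      by apply: (no_C7 sym irr HC7 a1 b1 c ck bk ak x); gs.
    case: (boolP (e ak b1)) => [Ekb1|Nkb1].
      have Nkb2 : ~~ e ak b2 by apply/negP => E; apply: (noc ak).
      by apply: (no_2P3 sym irr HP3 x a2 b2 ck bk ak); gs.
    by apply: (no_2P3 sym irr HP3 x a1 b1 ck bk ak); gs.
  + have [j [x [ji Hx Ex]]] := other_part i Ha1.
    have [m [y [mi Hy Ey]]] := other_part i Ha2.
    case: (boolP (e a2 x)) => [E2x|N2x].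
      by apply: (no_C6 sym irr HC6 a1 b1 c b2 a2 x); gs.
    case: (boolP (e a1 y)) => [E1y|N1y].
      by apply: (no_C6 sym irr HC6 a2 b2 c b1 a1 y); gs.
    case: (boolP (e x y)) => [Exy|Nxy].
      by apply: (no_C7 sym irr HC7 a1 x y a2 b2 c b1); gs.
    by apply: (no_2P3 sym irr HP3 x a1 b1 b2 a2 y); gs.
- have N12 : ~~ e b1 c2.
    by apply/negP => E; apply: (negP HnoC); apply/existsP; exists c2; rewrite Hc2 E E2.
  have N21 : ~~ e b2 c1.
    by apply/negP => E; apply: (negP HnoC); apply/existsP; exists c1; rewrite Hc1 E E1.
  case: (boolP (e a1 a2)) => [E12|N12a].
    by apply: (no_C6 sym irr HC6 b1 a1 a2 b2 c2 c1); gs.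
  have [j [x [ji Hx Ex]]] := other_part i Ha1.
  case: (boolP (e a2 x)) => [E2x|N2x].
    by apply: (no_C7 sym irr HC7 a1 b1 c1 c2 b2 a2 x); gs.
  by apply: (no_2P3 sym irr HP3 x a1 b1 a2 b2 c2); gs.
Qed.

Ltac adj_extra ::= first
  [ eapply C_clique; [eassumption|eassumption|neq0]
  | eapply B_clique; [eassumption|eassumption|neq0] ].

Lemma G1 a j x y k bk : a \in A -> x \in B j -> y \in B j -> e a x -> ~~ e a y ->
  k != j -> bk \in B k -> ~~ e a bk -> False.
Proof.
move=> Ha Hx Hy Ex Ny kj Hbk Nk.
have [m [mj mk]] := third_idx j k.
have [cm Hcm] := Cne m; have [ck [Hck Ek]] := bC Hbk.
by apply: (no_2P3 sym irr HP3 a x y cm ck bk); gs.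
Qed.

Lemma A_clique a1 a2 : a1 \in A -> a2 \in A -> a1 != a2 -> e a1 a2.
Proof.
move=> Ha1 Ha2 n12; apply/negPn/negP => N.
have claimX : forall i b j x m y, b \in B i -> e a1 b -> e a2 b -> x \in B j -> e a1 x ->
    y \in B m -> e a2 y -> j != i -> m != i -> j != m -> False.
  move=> i b j x m y Hb E1b E2b Hx E1x Hy E2y ji mi jm.
  have N2x : ~~ e a2 x.
    by apply/negP => E; apply: (no_C4 sym irr HC4 a1 b a2 x); gs.
  have N1y : ~~ e a1 y.
    by apply/negP => E; apply: (no_C4 sym irr HC4 a2 b a1 y); gs.
  have [cx [Hcx Ex]] := bC Hx; have [cy [Hcy Ey]] := bC Hy.
  by apply: (no_C7 sym irr HC7 a1 x cx cy y a2 b); gs.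
case: (boolP [exists i, [exists b in B i, e a1 b && e a2 b]]) =>
    [/existsP[i /existsP[b /and3P[Hb E1b E2b]]]|Hno].
  have [j [x [ji Hx E1x]]] := other_part i Ha1.
  have [m [y [mi Hy E2y]]] := other_part i Ha2.
  case: (eqVneq j m) => [Ejm|jm]; last by apply: (claimX i b j x m y).
  subst m.
  have N1y : ~~ e a1 y.
    by apply/negP => E; apply: (no_C4 sym irr HC4 a2 b a1 y); gs.
  have [k [ki kj]] := third_idx i j.
  have [bk Hbk] := Bne k.
  have E1k : e a1 bk by apply/negPn/negP => Nk; apply: (G1 Ha1 Hx Hy E1x N1y kj Hbk Nk).
  by apply: (claimX i b k bk j y).
have noc : forall b, e a1 b -> e a2 b -> b \in Bunion B -> False.
  move=> b E1 E2 /bigcupP[i _ Hb]; apply: (negP Hno); apply/existsP; exists i.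
  by apply/existsP; exists b; rewrite Hb E1 E2.
have inBU : forall b i, b \in B i -> b \in Bunion B.
  by move=> b i Hb; apply/bigcupP; exists i.
have sameP : forall i x y, x \in B i -> y \in B i -> e a1 x -> e a2 y -> False.
  move=> i x y Hx Hy Ex Ey.
  have N1y : ~~ e a1 y by apply/negP => E; apply: (noc y) => //; apply: inBU Hy.
  have [m [z [mi Hz Ez]]] := other_part i Ha2.
  have N1z : ~~ e a1 z by apply/negP => E; apply: (noc z) => //; apply: inBU Hz.
  by apply: (G1 Ha1 Hx Hy Ex N1y mi Hz N1z).
have [p [q [x1 [x2 [pq Hx1 Hx2 E11 E12]]]]] := two_parts Ha1.
have [r [s [y1 [y2 [rs Hy1 Hy2 E21 E22]]]]] := two_parts Ha2.
have pr : p != r by apply/eqP => E; subst r; apply: (sameP p x1 y1).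
have ps : p != s by apply/eqP => E; subst s; apply: (sameP p x1 y2).
have qr : q != r by apply/eqP => E; subst r; apply: (sameP q x2 y1).
have qs : q != s by apply/eqP => E; subst s; apply: (sameP q x2 y2).
have N1a : ~~ e a1 y1 by apply/negP => E; apply: (noc y1) => //; apply: inBU Hy1.
have N1b : ~~ e a1 y2 by apply/negP => E; apply: (noc y2) => //; apply: inBU Hy2.
have N2a : ~~ e a2 x1 by apply/negP => E; apply: (noc x1) => //; apply: inBU Hx1.
have N2b : ~~ e a2 x2 by apply/negP => E; apply: (noc x2) => //; apply: inBU Hx2.
by apply: (no_2P3 sym irr HP3 x1 a1 x2 y1 a2 y2); gs.
Qed.

Ltac adj_extra ::= first
  [ eapply C_clique; [eassumption|eassumption|neq0]
  | eapply B_clique; [eassumption|eassumption|neq0]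
  | eapply A_clique; [eassumption|eassumption|neq0] ].

Lemma G2 a i x j y k b m : a \in A -> x \in B i -> y \in B j -> i != j -> e a x -> e a y ->
  b \in B k -> ~~ e a b -> k != i -> k != j -> m != i -> m != j -> m != k -> False.
Proof.
move=> Ha Hx Hy ij Ex Ey Hb Nb ki kj mi mj mk.
have [cm Hcm] := Cne m; have [ck [Hck Ek]] := bC Hb.
by apply: (no_2P3 sym irr HP3 x a y cm ck b); gs.
Qed.

Lemma T4aux a p q x y b : 3 < t -> a \in A -> x \in B p -> y \in B q -> p != q ->
  e a x -> e a y -> b \in B p -> ~~ e a b -> False.
Proof.
move=> t4 Ha Hx Hy pq Ex Ey Hb Nb.
case: (nbr_dec a [pred j | (j != p) && (j != q)]) => [[j [z [/andP[jp jq] Hz Ez]]]|Hno].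
  have [m [mq mj mp]] := fourth_idx q j p t4.
  by apply: (G2 (m:=m) Ha Hy Hz _ Ey Ez Hb Nb); ineq.
have [j [jp jq]] := third_idx p q.
have [bj Hbj] := Bne j.
have Nj : ~~ e a bj by apply: (Hno j) => //; rewrite /= jp jq.
have [m [mp mq mj]] := fourth_idx p q j t4.
by apply: (G2 Ha Hx Hy pq Ex Ey Hbj Nj jp jq mp mq mj).
Qed.

Lemma T4 a k b : 3 < t -> a \in A -> b \in B k -> e a b.
Proof.
move=> t4 Ha Hb; apply/negPn/negP => Nb.
have [p [q [x [y [pq Hx Hy Ex Ey]]]]] := two_parts Ha.
case: (eqVneq k p) => [Ekp|kp].
  by subst k; apply: (T4aux t4 Ha Hx Hy pq Ex Ey Hb Nb).
case: (eqVneq k q) => [Ekq|kq].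
  by subst k; apply: (T4aux t4 Ha Hy Hx _ Ey Ex Hb Nb); ineq.
have [m [mp mq mk]] := fourth_idx p q k t4.
by apply: (G2 Ha Hx Hy pq Ex Ey Hb Nb kp kq mp mq mk).
Qed.

Lemma C5 a k b j z : a \in A -> b \in B k -> ~~ e a b -> j != k -> z \in B j -> e a z.
Proof.
move=> Ha Hb Nb jk Hz; apply/negPn/negP => Nz.
have [p [q [x [y [pq Hx Hy Ex Ey]]]]] := two_parts Ha.
have inK : forall w, w \in B k -> e a w -> False.
  by move=> w Hw Ew; apply: (G1 Ha Hw Hb Ew Nb jk Hz Nz).
have inJ : forall w, w \in B j -> e a w -> False.
  move=> w Hw Ew; apply: (G1 Ha Hw Hz Ew Nz _ Hb Nb); ineq.
case: (eqVneq p k) => [E|pk]; first by subst p; apply: (inK x).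
case: (eqVneq p j) => [E|pj]; first by subst p; apply: (inJ x).
case: (eqVneq q k) => [E|qk]; first by subst q; apply: (inK y).
case: (eqVneq q j) => [E|qj]; first by subst q; apply: (inJ y).
have t4 : 3 < t by apply: (four_dist pq pj pk qj qk jk).
by move: Nb; rewrite (T4 t4 Ha Hb).
Qed.

Lemma bad_unique a0 i0 b0 a k b : a0 \in A -> b0 \in B i0 -> ~~ e a0 b0 ->
  a \in A -> b \in B k -> ~~ e a b -> k = i0.
Proof.
move=> Ha0 Hb0 N0 Ha Hb Nab; apply/eqP/negPn/negP => ki.
have ik : i0 != k by rewrite eq_sym.
have E1 : e a b0 := C5 Ha Hb Nab ik Hb0.
have E2 : e a0 b := C5 Ha0 Hb0 N0 ki Hb.
have Eaa : e a a0 by gs.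
by move: N0; rewrite (L1 Ha Ha0 Hb0 Hb ik Eaa E1 E2 Nab).
Qed.

Lemma compl_other a0 i0 b0 a k b : a0 \in A -> b0 \in B i0 -> ~~ e a0 b0 ->
  a \in A -> b \in B k -> k != i0 -> e a b.
Proof.
move=> Ha0 Hb0 N0 Ha Hb ki; apply/negPn/negP => N.
by move: ki; rewrite (bad_unique Ha0 Hb0 N0 Ha Hb N) eqxx.
Qed.

Lemma claim6 a0 i0 b0 m b' c' : a0 \in A -> b0 \in B i0 -> ~~ e a0 b0 ->
  b' \in B m -> c' \in C m -> e b' c'.
Proof.
move=> Ha0 Hb0 N0 Hb' Hc'; apply/negPn/negP => N.
have CO := compl_other Ha0 Hb0 N0 Ha0.
case: (eqVneq m i0) => [Emi|mi].
  subst m.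
  have [j ji] := other_idx i0; have [k [ki kj]] := third_idx i0 j.
  have [bj Hbj] := Bne j; have [bk Hbk] := Bne k.
  have Ej := CO _ _ Hbj ji; have Ek := CO _ _ Hbk ki.
  case: (boolP (e a0 b')) => [E0|N0'].
    case: (boolP (e b0 c')) => [Ec|Nc].
      have [cj [Hcj Ecj]] := bC Hbj.
      by apply: (no_C6 sym irr HC6 a0 b' b0 c' cj bj); gs.
    have [c0 [Hc0 Ec0]] := bC Hb0.
    by apply: (no_2P3 sym irr HP3 bj a0 bk b0 c0 c'); gs.
  have [c'' [Hc'' Ec'']] := bC Hb'.
  by apply: (no_2P3 sym irr HP3 bj a0 bk b' c'' c'); gs.
have [k [ki km]] := third_idx i0 m.
have [b3 Hb3] := Bne k.
have E3 := CO _ _ Hb3 ki; have E' := CO _ _ Hb' mi.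
have [c1 [Hc1 Ec1]] := bC Hb0.
by apply: (no_2P3 sym irr HP3 b' a0 b3 b0 c1 c'); gs.
Qed.

Lemma inBU b i : b \in B i -> b \in Bunion B.
Proof. by move=> Hb; apply/bigcupP; exists i. Qed.

Lemma compA a a' : a \in A -> a' \in A ->
  (forall b, b \in Bunion B -> e a b -> e a' b) \/ (forall b, b \in Bunion B -> e a' b -> e a b).
Proof.
move=> Ha Ha'.
case: (boolP [forall b in Bunion B, e a b ==> e a' b]) => [/forallP H|/forallPn[p]].
  by left => b Hb Eb; have := H b; rewrite Hb Eb.
rewrite !negb_imply => /andP[/bigcupP[i _ Hp] /andP[Ep Np]].
right => b /bigcupP[j _ Hb] Eb; apply/negPn/negP => Nb.
case: (eqVneq i j) => [Eij|ij].
  subst j; by apply: (no_C4 sym irr HC4 a p b a'); gs.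
have Eaa : e a a' by gs.
by move: Np; rewrite (L1 Ha Ha' Hp Hb ij Eaa Ep Eb Nb).
Qed.

Lemma compBC i b b' : b \in B i -> b' \in B i ->
  (forall c, c \in C i -> e b c -> e b' c) \/ (forall c, c \in C i -> e b' c -> e b c).
Proof.
move=> Hb Hb'.
case: (boolP [forall c in C i, e b c ==> e b' c]) => [/forallP H|/forallPn[p]].
  by left => c Hc Ec; have := H c; rewrite Hc Ec.
rewrite !negb_imply => /andP[Hp /andP[Ep Np]].
right => c Hc Ec; apply/negPn/negP => Nc.
by apply: (no_C4 sym irr HC4 b p c b'); gs.
Qed.

Lemma compCB i c c' : c \in C i -> c' \in C i ->
  (forall b, b \in B i -> e c b -> e c' b) \/ (forall b, b \in B i -> e c' b -> e c b).
Proof.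
move=> Hc Hc'.
case: (boolP [forall b in B i, e c b ==> e c' b]) => [/forallP H|/forallPn[p]].
  by left => b Hb Eb; have := H b; rewrite Hb Eb.
rewrite !negb_imply => /andP[Hp /andP[Ep Np]].
right => b Hb Eb; apply/negPn/negP => Nb.
by apply: (no_C4 sym irr HC4 c p b c'); gs.
Qed.

Lemma NEST (s : seq T) (S X : {set T}) K : enumerates s S -> deg_nonincr e s ->
  (forall u v, u \in S -> v \in S ->
     (forall x, x \in X -> e u x -> e v x) \/ (forall x, x \in X -> e v x -> e u x)) ->
  (forall u, u \in S -> #|nbhd e u :\: X| = K) -> nested_nbhd e s X.
Proof.
move=> [Hu Hm] Hdeg Hcomp HK x0 j k jk ks.
have js : j < size s := leq_ltn_trans jk ks.
have Su : nth x0 s k \in S by rewrite -Hm mem_nth.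
have Sv : nth x0 s j \in S by rewrite -Hm mem_nth.
have Hd := Hdeg x0 j k jk ks.
move: Hd Su Sv; set u := nth x0 s k; set v := nth x0 s j => Hd Su Sv.
case: (Hcomp u v Su Sv) => H.
  by apply/subsetP => x; rewrite !inE => /andP[Eux Hx]; rewrite Hx andbT; apply: H.
have sub : nbhd e v :&: X \subset nbhd e u :&: X.
  by apply/subsetP => x; rewrite !inE => /andP[Eux Hx]; rewrite Hx andbT; apply: H.
have cd : #|nbhd e u :&: X| <= #|nbhd e v :&: X|.
  move: Hd; rewrite /deg -(cardsID X (nbhd e u)) -(cardsID X (nbhd e v)).
  by rewrite (HK u Su) (HK v Sv) leq_add2r.
have /eqP Eq : nbhd e v :&: X == nbhd e u :&: X by rewrite eqEcard sub cd.
by rewrite Eq.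
Qed.

Lemma FF (s : seq T) (S X : {set T}) : enumerates s S -> nested_nbhd e s X ->
  (forall x, x \in X -> exists u, u \in S /\ e u x) -> first_full e s X.
Proof.
move=> [Hu Hm] Hn Hc x0 s0; apply/setP => x; rewrite !inE.
apply/andP/idP => [[]//|Hx]; split => //.
have [u [Su Eu]] := Hc x Hx.
have us : u \in s by rewrite Hm.
have := Hn x0 0 (index u s) (leq0n _); rewrite index_mem nth_index // => /(_ us) /subsetP /(_ x).
by rewrite !inE Eu Hx => /(_ isT) /andP[].
Qed.

Lemma nest_triv (s : seq T) (S X : {set T}) : enumerates s S ->
  (forall u x, u \in S -> x \in X -> e u x) -> nested_nbhd e s X.
Proof.
move=> [Hu Hm] H x0 j k jk ks.
have js : j < size s := leq_ltn_trans jk ks.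
have Su : nth x0 s k \in S by rewrite -Hm mem_nth.
have Sv : nth x0 s j \in S by rewrite -Hm mem_nth.
apply/subsetP => x; rewrite !inE => /andP[_ Hx]; rewrite Hx andbT.
exact: H.
Qed.

Lemma card_D1 (S : {set T}) u : u \in S -> #|S :\ u| = #|S| - 1.
Proof. by move=> Hu; rewrite [in RHS](cardsD1 u S) Hu add1n subn1. Qed.

Lemma nbA_out a : a \in A -> nbhd e a :\: Bunion B = A :\ a.
Proof.
move=> Ha; apply/setP => v; rewrite !inE.
apply/andP/andP => [[/bigcupP NB Eav]|[nv Hv]].
  split; first by apply: contraTneq Eav => ->; rewrite irr.
  case: (cover v) => [//|[i Hv]|[i Hv]]; first by case: NB; exists i.
  by move: Eav; rewrite (negbTE (nAC Ha Hv)).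
split; last by gs.
by apply/bigcupP => [[i _ Hi]]; apply: (AnB Hv Hi).
Qed.

Definition Cunion := \bigcup_(j < t) C j.

Lemma nbC_out i c : c \in C i -> nbhd e c :\: B i = Cunion :\ c.
Proof.
move=> Hc; apply/setP => v; rewrite !inE.
apply/andP/andP => [[NB Ecv]|[nv /bigcupP[j _ Hv]]].
  split; first by apply: contraTneq Ecv => ->; rewrite irr.
  case: (cover v) => [Hv|[j Hv]|[j Hv]]; last by apply/bigcupP; exists j.
    by move: Ecv; rewrite sym (negbTE (nAC Hv Hc)).
  case: (eqVneq j i) => [E|ji]; first by subst j; rewrite Hv in NB.
  by move: Ecv; rewrite sym (negbTE (nBC Hv Hc ji)).
split; last first.
  case: (eqVneq j i) => [E|ji]; first by subst j; gs.
  by gs.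
by apply/negP => Hb; apply: (BnC Hb Hv).
Qed.

Lemma nbB_out i b : complete e A (Bunion B) -> b \in B i ->
  nbhd e b :\: C i = (A :|: B i) :\ b.
Proof.
move=> Hc Hb; apply/setP => v; rewrite !inE.
apply/andP/andP => [[NC Ebv]|[nv /orP[Hv|Hv]]].
  split; first by apply: contraTneq Ebv => ->; rewrite irr.
  case: (cover v) => [->//|[j Hv]|[j Hv]].
    case: (eqVneq j i) => [E|ji]; first by subst j; rewrite Hv orbT.
    by move: Ebv; rewrite sym (negbTE (nBB Hv Hb ji)).
  case: (eqVneq j i) => [E|ji]; first by subst j; rewrite Hv in NC.
  by move: Ebv; rewrite (negbTE (nBC Hb Hv _)) // eq_sym.
  split; first by apply/negP => Hc'; apply: (AnC Hv Hc').
  by rewrite sym; apply: Hc => //; apply: inBU Hb.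
split; first by apply/negP => Hc'; apply: (BnC Hv Hc').
by gs.
Qed.

Lemma enum_size (s : seq T) (S : {set T}) x : enumerates s S -> x \in S -> 0 < size s.
Proof. by move=> [_ Hm] Hx; rewrite -Hm in Hx; case: (s) Hx. Qed.

Lemma mem_last (s : seq T) (S : {set T}) x0 : enumerates s S -> 0 < size s -> last_elt x0 s \in S.
Proof. by move=> [_ Hm] s0; rewrite -Hm /last_elt mem_nth // ltn_predL. Qed.

Lemma mem_first (s : seq T) (S : {set T}) x0 : enumerates s S -> 0 < size s -> nth x0 s 0 \in S.
Proof. by move=> [_ Hm] s0; rewrite -Hm mem_nth. Qed.

Lemma compP : reflect (complete e A (Bunion B)) [forall x in A, [forall y in Bunion B, e x y]].
Proof.
apply: (iffP idP).
  move=> /forallP H x y Hx Hy; have := H x; rewrite Hx => /forallP /(_ y).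
  by rewrite Hy.
move=> H; apply/forallP => x; apply/implyP => Hx; apply/forallP => y; apply/implyP => Hy.
exact: H.
Qed.

Lemma part_c i sBi sCi : enumerates sBi (B i) -> deg_nonincr e sBi ->
  enumerates sCi (C i) -> deg_nonincr e sCi ->
  [/\ nested_nbhd e sBi (C i), first_full e sBi (C i) &
      (forall x0, 0 < size sBi -> nth x0 sCi 0 \in nbhd e (last_elt x0 sBi) :&: C i)] /\
  [/\ nested_nbhd e sCi (B i), first_full e sCi (B i) &
      (forall x0, 0 < size sCi -> nth x0 sBi 0 \in nbhd e (last_elt x0 sCi) :&: B i)].
Proof.
move=> EB DB EC DC.
have nB : nested_nbhd e sBi (C i).
  case: compP => [Hc|NC].
    apply: (NEST (K := #|A :|: B i| - 1) EB DB).
      by move=> u v Hu Hv; apply: (compBC Hu Hv).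
    by move=> u Hu; rewrite (nbB_out Hc Hu) card_D1 // inE Hu orbT.
  have [a0 [b0 [i0 [Ha0 Hb0 N0]]]] : exists a0 b0 i0, [/\ a0 \in A, b0 \in B i0 & ~~ e a0 b0].
    case: (boolP [exists x in A, [exists y in Bunion B, ~~ e x y]]) =>
       [/existsP[a0 /andP[Ha0 /existsP[b0 /andP[/bigcupP[i0 _ Hb0] N0]]]]|H].
      by exists a0, b0, i0.
    exfalso; apply: NC => x y Hx Hy; apply/negPn/negP => N; apply: (negP H).
    by apply/existsP; exists x; rewrite Hx; apply/existsP; exists y; rewrite Hy N.
  by apply: (nest_triv EB) => u x Hu Hx; exact: (claim6 Ha0 Hb0 N0 Hu Hx).
have nC : nested_nbhd e sCi (B i).
  apply: (NEST (K := #|Cunion| - 1) EC DC).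
    by move=> u v Hu Hv; apply: (compCB Hu Hv).
  by move=> u Hu; rewrite (nbC_out Hu) card_D1 //; apply/bigcupP; exists i.
have fB : first_full e sBi (C i).
  by apply: (FF EB nB) => x Hx; have [b [Hb E]] := cB Hx; exists b.
have fC : first_full e sCi (B i).
  by apply: (FF EC nC) => x Hx; have [c [Hc E]] := bC Hx; exists c; split => //; rewrite sym.
have [c Hc] := Cne i; have sC0 := enum_size EC Hc.
have [b Hb] := Bne i; have sB0 := enum_size EB Hb.
split; split => // x0 s0.
  have Hc0 := mem_first x0 EC sC0; have Hl := mem_last x0 EB s0.
  have /setP/(_ (last_elt x0 sBi)) := fC x0 sC0; rewrite !inE Hl andbT => E.
  by rewrite Hc0 andbT sym.
have Hb0 := mem_first x0 EB sB0; have Hl := mem_last x0 EC s0.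
have /setP/(_ (last_elt x0 sCi)) := fB x0 sB0; rewrite !inE Hl andbT => E.
by rewrite Hb0 andbT sym.
Qed.

Lemma part_b sA : enumerates sA A -> deg_nonincr e sA -> ~ complete e A (Bunion B) ->
  [/\ t = 3, exists istar, [/\ nested_nbhd e sA (Bunion B), first_full e sA (Bunion B),
       (forall x0, 0 < size sA -> Bunion B :\: B istar \subset nbhd e (last_elt x0 sA) :&: Bunion B)
       & complete e A (Bunion B :\: B istar)]
     & forall i, complete e (B i) (C i)].
Proof.
move=> EA DA NC.
have [a0 [b0 [i0 [Ha0 Hb0 N0]]]] : exists a0 b0 i0, [/\ a0 \in A, b0 \in B i0 & ~~ e a0 b0].
  case: (boolP [exists x in A, [exists y in Bunion B, ~~ e x y]]) =>
     [/existsP[a0 /andP[Ha0 /existsP[b0 /andP[/bigcupP[i0 _ Hb0] N0]]]]|H].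
    by exists a0, b0, i0.
  exfalso; apply: NC => x y Hx Hy; apply/negPn/negP => N; apply: (negP H).
  by apply/existsP; exists x; rewrite Hx; apply/existsP; exists y; rewrite Hy N.
have t3' : t = 3.
  case: (ltnP 3 t) => [t4|t3le]; last by apply/eqP; rewrite eqn_leq t3le t3.
  by move: N0; rewrite (T4 t4 Ha0 Hb0).
split => //; last by move=> i b c Hb Hc; apply: (claim6 Ha0 Hb0 N0 Hb Hc).
exists i0.
have nA : nested_nbhd e sA (Bunion B).
  apply: (NEST (K := #|A| - 1) EA DA).
    by move=> u v Hu Hv; apply: (compA Hu Hv).
  by move=> u Hu; rewrite (nbA_out Hu) card_D1.
have cA : complete e A (Bunion B :\: B i0).
  move=> x y Hx; rewrite !inE => /andP[Ny /bigcupP[k _ Hy]].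
  have kn : k != i0 by apply: contraNneq Ny => <-.
  exact: (compl_other Ha0 Hb0 N0 Hx Hy kn).
split => //.
  by apply: (FF EA nA) => x /bigcupP[i _ Hx]; have [a [Ha E]] := bA Hx; exists a.
move=> x0 s0; apply/subsetP => x Hx; move: (Hx); rewrite !inE => /andP[_ HxB].
by rewrite HxB andbT; apply: cA => //; apply: mem_last EA s0.
Qed.

Lemma master sA (sB sC : 'I_t -> seq T) : enumerates sA A -> deg_nonincr e sA ->
  (forall i, enumerates (sB i) (B i) /\ deg_nonincr e (sB i)) ->
  (forall i, enumerates (sC i) (C i) /\ deg_nonincr e (sC i)) ->
  [/\
      clique e A /\ (forall i, clique e (B i)) /\ (forall i, clique e (C i)),
      complete e A (Bunion B) \/
      [/\ t = 3,
          exists istar, [/\ nested_nbhd e sA (Bunion B),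
                            first_full e sA (Bunion B) &
                            forall x0, 0 < size sA ->
                              Bunion B :\: B istar \subset
                              nbhd e (last_elt x0 sA) :&: Bunion B] &
          forall i, complete e (B i) (C i)],
      (forall i,
         [/\ nested_nbhd e (sB i) (C i), first_full e (sB i) (C i) &
             (forall x0, 0 < size (sB i) ->
                nth x0 (sC i) 0 \in nbhd e (last_elt x0 (sB i)) :&: C i)] /\
         [/\ nested_nbhd e (sC i) (B i), first_full e (sC i) (B i) &
             (forall x0, 0 < size (sC i) ->
                nth x0 (sB i) 0 \in nbhd e (last_elt x0 (sC i)) :&: B i)]),
      (complete e A (Bunion B) -> villa_partition e A B C) &
      (~ complete e A (Bunion B) -> t = 3 /\ basket_partition e A B C set0)].
Proof.
move=> EA DA HsB HsC.
have clA : clique e A by move=> x y; apply: A_clique.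
have clB : forall i, clique e (B i) by move=> i x y; apply: B_clique.
have clC : forall i, clique e (C i) by move=> i x y; apply: C_clique.
have pc : forall i, _ := fun i => part_c (HsB i).1 (HsB i).2 (HsC i).1 (HsC i).2.
split => //.
- case: compP => [Hc|NC]; first by left.
  right; have [t3' [istar [nA fA sub _]] BC'] := part_b EA DA NC.
  by split => //; exists istar.
- move=> Hc.
  split; first exact t3. split; first exact Hpart. split; first exact HAn.
  split; first exact HBn. split; first exact HCn. split; first exact clA.
  split; first exact clB. split; first exact clC. split; first exact Hc.
  split; first exact HAC. split; first exact HBB. split; first exact HCC.
  split; first exact HBC.
  move=> i; exists (sB i); have [[nB fB _] _] := pc i.
  split => //; first exact (HsB i).1.
  move=> x0 s0; have Hl := mem_last x0 (HsB i).1 s0.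
  have [c [Hc' E]] := bC Hl; apply/set0Pn; exists c; by rewrite !inE E Hc'.
- move=> NC; have [t3' [istar [nA fA sub cA]] BC'] := part_b EA DA NC.
  split => //.
  split => //. split.
    by move=> x; rewrite -cats1 count_cat Hpart /= in_set0.
  split; first exact HAn. split; first exact HBn. split; first exact HCn.
  split; first exact clA. split; first exact clB. split; first exact clC.
  split; first by move=> x y; rewrite in_set0.
  split; first exact HBB. split; first exact HCC.
  split.
    exists istar; split => //; exists sA; split => //.
      move=> x0 j k jk ks; apply/subsetP => x; rewrite !inE => /andP[E Hx].
      have := subsetP (nA x0 j k jk ks) x; rewrite !inE E (inBU Hx) => /(_ isT) /andP[E' _].
      by rewrite E' Hx.
    move=> x0 s0; apply/setP => x; rewrite !inE.
    case: (boolP (x \in B istar)) => Hx; rewrite ?andbF ?andbT //.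
    by have /setP/(_ x) := fA x0 s0; rewrite !inE (inBU Hx) andbT => ->.
  split; first exact HAC. split; first exact BC'. split; first exact HBC.
  by exists istar; split => x y; rewrite in_set0.
Qed.
End Main.

Theorem lemma5p5 (T : finType) (e : rel T) (t : nat)
  (A : {set T}) (B C : 'I_t -> {set T})
  (sA : seq T) (sB sC : 'I_t -> seq T) :
  simple_graph e ->
  3 <= t ->
  H_free e twoP3 -> H_free e (@cycle_rel 4) -> H_free e (@cycle_rel 6) ->
  H_free e (@cycle_rel 7) -> H_free e T0_rel -> H_free e (@pentagon_rel t.+1) ->
  frame_partition e A B C ->
  enumerates sA A -> deg_nonincr e sA ->
  (forall i, enumerates (sB i) (B i) /\ deg_nonincr e (sB i)) ->
  (forall i, enumerates (sC i) (C i) /\ deg_nonincr e (sC i)) ->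
  [/\ (* (a) *)
      clique e A /\ (forall i, clique e (B i)) /\ (forall i, clique e (C i)),
      (* (b) *)
      complete e A (Bunion B) \/
      [/\ t = 3,
          exists istar, [/\ nested_nbhd e sA (Bunion B),
                            first_full e sA (Bunion B) &
                            forall x0, 0 < size sA ->
                              Bunion B :\: B istar \subset
                              nbhd e (last_elt x0 sA) :&: Bunion B] &
          forall i, complete e (B i) (C i)],
      (* (c) *)
      (forall i,
         [/\ nested_nbhd e (sB i) (C i), first_full e (sB i) (C i) &
             (forall x0, 0 < size (sB i) ->
                nth x0 (sC i) 0 \in nbhd e (last_elt x0 (sB i)) :&: C i)] /\
         [/\ nested_nbhd e (sC i) (B i), first_full e (sC i) (B i) &
             (forall x0, 0 < size (sC i) ->
                nth x0 (sB i) 0 \in nbhd e (last_elt x0 (sC i)) :&: B i)]),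
      (* (d) *)
      (complete e A (Bunion B) -> villa_partition e A B C) &
      (* (e) *)
      (~ complete e A (Bunion B) -> t = 3 /\ basket_partition e A B C set0)].
Proof.
move=> [sym irr] t3 HP3 HC4 HC6 HC7 HT0 Hpent
  [_ [Hpart [HAn [HBn [HCn [HA2 [HAC [HBB [HCC [HBC HBi]]]]]]]]]] EA DA HsB HsC.
by eapply master; eassumption.
Qed.
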